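(* The disease-free equilibrium $E_0=\left(\frac{\Lambda}{\lambda},\frac{r\Lambda}{\mu\lambda},0,0\right)$ of the model is unstable if $\mathcal{R}_0>1$ and locally asymptotically stable if $\mathcal{R}_0<1$.
   Context: The model is $\dot S=\Lambda-F_1(S,I_1)-F_2(S,I_2)-\lambda S$, $\dot V_1=rS-(\mu+kI_2)V_1$, $\dot I_1=F_1(S,I_1)-\alpha_1I_1$, $\dot I_2=F_2(S,I_2)+kI_2V_1-\alpha_2I_2$ on $\mathbb{R}^4_+$. The constants $\Lambda,\mu,r,k,\gamma_1,\gamma_2>0$ and $v_1,v_2\ge0$; $\lambda=r+\mu$ and $\alpha_i=\gamma_i+v_i+\mu$. For $i=1,2$ the incidence functions satisfy: - (H1) $F_i(S,I_i)=I_if_i(S,I_i)$ with $F_i,f_i\in C^2(\mathbb{R}^2_+,\mathbb{R}_+)$ and $F_i(0,I_i)=F_i(S,0)=0$; - (H2) $\partial f_i/\partial S>0$ and $\partial f_i/\partial I_i\le0$; - (H3) $\lim_{I_i\to0^+}F_i(S,I_i)/I_i$ exists and is positive for $S>0$. Let $S^0=\Lambda/\lambda$ and $\sigma_i=\frac{\partial F_i}{\partial I_i}(S^0,0)$. Set $\mathcal{R}_1=\sigma_1/\alpha_1$, $\mathcal{R}_2=\sigma_2/\alpha_2+\frac{kr\Lambda}{\alpha_2\mu\lambda}$ and $\mathcal{R}_0=\max\{\mathcal{R}_1,\mathcal{R}_2\}$. *)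

(* Defs.v *)
From Stdlib Require Import Reals.
From Coquelicot Require Import Coquelicot.
Open Scope R_scope.

Definition dS (g : R -> R -> R) (s i : R) : R := Derive (fun s' => g s' i) s.
Definition dI (g : R -> R -> R) (s i : R) : R := Derive (fun i' => g s i') i.

Definition C1_2d (g : R -> R -> R) : Prop :=
  forall s i : R,
    ex_derive (fun s' => g s' i) s /\ ex_derive (fun i' => g s i') i /\
    continuous (fun p : R * R => g (fst p) (snd p)) (s, i) /\
    continuous (fun p : R * R => dS g (fst p) (snd p)) (s, i) /\
    continuous (fun p : R * R => dI g (fst p) (snd p)) (s, i).

Definition C2_2d (g : R -> R -> R) : Prop :=
  C1_2d g /\ C1_2d (dS g) /\ C1_2d (dI g).

(** Hypotheses (H1)-(H3) on an incidence function F = I f, stated on the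
    closed quadrant R^2_+ (F, f are given as C^2 functions on R^2 whose
    restrictions to R^2_+ are the incidence functions). *)
Definition incidence_hyp (F f : R -> R -> R) : Prop :=
  C2_2d F /\ C2_2d f /\
  (forall s i, 0 <= s -> 0 <= i -> F s i = i * f s i) /\
  (forall s i, 0 <= s -> 0 <= i -> 0 <= F s i /\ 0 <= f s i) /\
  (forall i, 0 <= i -> F 0 i = 0) /\
  (forall s, 0 <= s -> F s 0 = 0) /\
  (forall s i, 0 <= s -> 0 <= i -> dS f s i > 0 /\ dI f s i <= 0) /\
  (forall s, 0 < s ->
     exists L, 0 < L /\ filterlim (fun i => F s i / i) (at_right 0) (locally L)).

Definition lam (r mu : R) : R := r + mu.
Definition alpha (gam v mu : R) : R := gam + v + mu.
Definition S0 (Lam r mu : R) : R := Lam / lam r mu.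

Definition E0_S (Lam r mu : R) : R := Lam / lam r mu.
Definition E0_V (Lam r mu : R) : R := r * Lam / (mu * lam r mu).

Definition sigma (F : R -> R -> R) (Lam r mu : R) : R := dI F (S0 Lam r mu) 0.
Definition calR1 (F1 : R -> R -> R) (Lam mu r gam1 v1 : R) : R :=
  sigma F1 Lam r mu / alpha gam1 v1 mu.
Definition calR2 (F2 : R -> R -> R) (Lam mu r k gam2 v2 : R) : R :=
  sigma F2 Lam r mu / alpha gam2 v2 mu
  + k * r * Lam / (alpha gam2 v2 mu * mu * lam r mu).
Definition calR0 (F1 F2 : R -> R -> R) (Lam mu r k gam1 gam2 v1 v2 : R) : R :=
  Rmax (calR1 F1 Lam mu r gam1 v1) (calR2 F2 Lam mu r k gam2 v2).

Definition is_solution (F1 F2 : R -> R -> R) (Lam mu r k gam1 gam2 v1 v2 : R)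
    (S V I1 I2 : R -> R) : Prop :=
  (forall t, 0 <= t -> 0 <= S t /\ 0 <= V t /\ 0 <= I1 t /\ 0 <= I2 t) /\
  filterlim S (at_right 0) (locally (S 0)) /\
  filterlim V (at_right 0) (locally (V 0)) /\
  filterlim I1 (at_right 0) (locally (I1 0)) /\
  filterlim I2 (at_right 0) (locally (I2 0)) /\
  (forall t, 0 < t ->
     is_derive S t (Lam - F1 (S t) (I1 t) - F2 (S t) (I2 t) - lam r mu * S t) /\
     is_derive V t (r * S t - (mu + k * I2 t) * V t) /\
     is_derive I1 t (F1 (S t) (I1 t) - alpha gam1 v1 mu * I1 t) /\
     is_derive I2 t (F2 (S t) (I2 t) + k * I2 t * V t - alpha gam2 v2 mu * I2 t)).

Definition dist4 (a1 a2 a3 a4 b1 b2 b3 b4 : R) : R :=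
  sqrt ((a1 - b1) ^ 2 + (a2 - b2) ^ 2 + (a3 - b3) ^ 2 + (a4 - b4) ^ 2).

Definition E0_stable (F1 F2 : R -> R -> R) (Lam mu r k gam1 gam2 v1 v2 : R) : Prop :=
  forall eps, 0 < eps -> exists delta, 0 < delta /\
    forall S V I1 I2,
      is_solution F1 F2 Lam mu r k gam1 gam2 v1 v2 S V I1 I2 ->
      dist4 (S 0) (V 0) (I1 0) (I2 0) (E0_S Lam r mu) (E0_V Lam r mu) 0 0 < delta ->
      forall t, 0 <= t ->
        dist4 (S t) (V t) (I1 t) (I2 t) (E0_S Lam r mu) (E0_V Lam r mu) 0 0 < eps.

Definition E0_attractive (F1 F2 : R -> R -> R) (Lam mu r k gam1 gam2 v1 v2 : R) : Prop :=
  exists eta, 0 < eta /\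
    forall S V I1 I2,
      is_solution F1 F2 Lam mu r k gam1 gam2 v1 v2 S V I1 I2 ->
      dist4 (S 0) (V 0) (I1 0) (I2 0) (E0_S Lam r mu) (E0_V Lam r mu) 0 0 < eta ->
      filterlim (fun t => dist4 (S t) (V t) (I1 t) (I2 t)
                            (E0_S Lam r mu) (E0_V Lam r mu) 0 0)
                (Rbar_locally p_infty) (locally 0).

Definition E0_LAS (F1 F2 : R -> R -> R) (Lam mu r k gam1 gam2 v1 v2 : R) : Prop :=
  E0_stable F1 F2 Lam mu r k gam1 gam2 v1 v2 /\
  E0_attractive F1 F2 Lam mu r k gam1 gam2 v1 v2.

Definition E0_unstable (F1 F2 : R -> R -> R) (Lam mu r k gam1 gam2 v1 v2 : R) : Prop :=
  ~ E0_stable F1 F2 Lam mu r k gam1 gam2 v1 v2.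

(* Main.v *)
Require Import Defs.
From Stdlib Require Import Reals Lra Psatz Lia ZArith Classical ClassicalEpsilon.
From Coquelicot Require Import Coquelicot.
Require Import Defs.
Open Scope R_scope.

Lemma d_mul f g x df dg: is_derive f x df -> is_derive g x dg ->
  is_derive (fun t => f t * g t) x (df * g x + f x * dg).
Proof. intros Hf Hg. apply (is_derive_mult f g x df dg Hf Hg). intros; apply Rmult_comm. Qed.
Lemma d_plus f g x df dg: is_derive f x df -> is_derive g x dg ->
  is_derive (fun t => f t + g t) x (df + dg).
Proof. intros Hf Hg. apply (is_derive_plus f g x df dg Hf Hg). Qed.
Lemma d_minus f g x df dg: is_derive f x df -> is_derive g x dg ->
  is_derive (fun t => f t - g t) x (df - dg).
Proof. intros Hf Hg. apply (is_derive_minus f g x df dg Hf Hg). Qed.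
Lemma d_const (a x : R) : is_derive (fun _ => a) x 0.
Proof. apply (is_derive_const a x). Qed.
Lemma d_expl (a x : R) : @is_derive R_AbsRing R_NormedModule (fun t => exp (a * t)) x (a * exp (a * x)).
Proof. auto_derive; [exact I| ring]. Qed.
Lemma d_ext (f g : R -> R) (x l : R) : (forall t, f t = g t) -> is_derive f x l -> is_derive g x l.
Proof. intros H Hd. eapply is_derive_ext; eauto. Qed.

Lemma ball_R (x e y : R) : ball x e y <-> Rabs (y - x) < e.
Proof. reflexivity. Qed.

Lemma cont_of_eps (f : R -> R) x :
  (forall e, 0 < e -> exists d, 0 < d /\ forall y, Rabs (y - x) < d -> Rabs (f y - f x) < e) ->
  continuous f x.
Proof.
  intros H. apply (filterlim_locally f (f x)). intros e.
  destruct (H e (cond_pos e)) as [d [Hd Hy]].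
  exists (mkposreal d Hd). intros y Hb. apply Hy. apply Hb.
Qed.

Lemma eps_of_cont (f : R -> R) x : continuous f x ->
  forall e, 0 < e -> exists d, 0 < d /\ forall y, Rabs (y - x) < d -> Rabs (f y - f x) < e.
Proof.
  intros H e He. destruct (proj1 (filterlim_locally f (f x)) H (mkposreal e He)) as [d Hd].
  exists d. split. apply cond_pos. intros y Hy. apply (Hd y Hy).
Qed.

Lemma rc_eps (f : R -> R) a : filterlim f (at_right 0) (locally a) ->
  forall e, 0 < e -> exists d, 0 < d /\ forall s, 0 < s < d -> Rabs (f s - a) < e.
Proof.
  intros H e He. destruct (proj1 (filterlim_locally f a) H (mkposreal e He)) as [d Hd].
  exists d. split. apply cond_pos. intros s Hs. apply (Hd s). apply ball_R. rewrite Rminus_0_r, Rabs_pos_eq; lra. lra.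
Qed.

Lemma eps_rc (f : R -> R) a :
  (forall e, 0 < e -> exists d, 0 < d /\ forall s, 0 < s < d -> Rabs (f s - a) < e) ->
  filterlim f (at_right 0) (locally a).
Proof.
  intros H. apply (filterlim_locally f a). intros e.
  destruct (H e (cond_pos e)) as [d [Hd Hs]]. exists (mkposreal d Hd).
  intros y Hb Hy. apply Hs. assert (Hb' : Rabs (y - 0) < d) by exact Hb. rewrite Rminus_0_r in Hb'.
  apply Rabs_lt_between in Hb'. simpl in *. lra.
Qed.

Lemma rc_of_cont (f : R -> R) : continuous f 0 -> filterlim f (at_right 0) (locally (f 0)).
Proof.
  intros H. apply eps_rc. intros e He. destruct (eps_of_cont f 0 H e He) as [d [Hd Hy]].
  exists d; split; auto. intros s Hs. apply Hy. rewrite Rminus_0_r, Rabs_pos_eq; lra.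
Qed.

Lemma mono (f df : R -> R) a b : a <= b ->
  (forall x, a <= x <= b -> is_derive f x (df x)) ->
  (forall x, a <= x <= b -> 0 <= df x) -> f a <= f b.
Proof.
  intros Hab Hd Hp.
  destruct (MVT_gen f a b df) as [c [Hc Heq]].
  - intros x Hx. apply Hd. rewrite Rmin_left, Rmax_right in Hx by lra. lra.
  - intros x Hx. apply continuity_pt_filterlim. apply (ex_derive_continuous f x).
    exists (df x). apply Hd. rewrite Rmin_left, Rmax_right in Hx by lra. lra.
  - rewrite Rmin_left, Rmax_right in Hc by lra.
    assert (0 <= df c) by (apply Hp; lra). nra.
Qed.

Lemma d_eqv (f : R -> R) x l l' : is_derive f x l -> l = l' -> is_derive f x l'.
Proof. intros H ->; exact H. Qed.
Lemma fl_plus {F : (R -> Prop) -> Prop} {FF : Filter F} (f g : R -> R) a b :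
  filterlim f F (locally a) -> filterlim g F (locally b) -> filterlim (fun t => f t + g t) F (locally (a+b)).
Proof. intros Hf Hg. eapply filterlim_comp_2; [exact Hf|exact Hg|]. apply (filterlim_plus (K:=R_AbsRing) (V:=R_NormedModule) a b). Qed.
Lemma fl_mult {F : (R -> Prop) -> Prop} {FF : Filter F} (f g : R -> R) a b :
  filterlim f F (locally a) -> filterlim g F (locally b) -> filterlim (fun t => f t * g t) F (locally (a*b)).
Proof. intros Hf Hg. eapply filterlim_comp_2; [exact Hf|exact Hg|]. apply (filterlim_mult (K:=R_AbsRing) a b). Qed.
Ltac req := match goal with |- ?a = ?b => change (@eq R a b) end; ring.
Lemma cmp (x xd : R -> R) (a K c m : R) :
  filterlim x (at_right 0) (locally (x 0)) ->
  (forall t, 0 < t -> is_derive x t (xd t)) ->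
  (forall t, 0 < t -> xd t - c * K * exp (- c * t) + a * (x t + K * exp (- c * t) + m) >= 0) ->
  forall t, 0 <= t -> x t + K * exp (- c * t) + m >= (x 0 + K + m) * exp (- a * t).
Proof.
  intros Hrc Hd Hg.
  set (w := fun t => (x t + K * exp (- c * t) + m) * exp (a * t)).
  assert (Hw : forall s t, 0 < s -> s <= t -> w s <= w t).
  { intros s t Hs Hst.
    apply (mono w (fun t => (xd t - c * K * exp (- c * t) + a * (x t + K * exp (- c * t) + m)) * exp (a * t))); auto.
    - intros y Hy. unfold w.
      eapply d_eqv; [apply (d_mul (fun t => x t + K * exp (- c * t) + m) (fun t => exp (a * t)))|].
      + apply (d_plus (fun t => x t + K * exp (- c * t)) (fun _ => m)); [|apply d_const].
        apply (d_plus x (fun t => K * exp (- c * t))). apply Hd; lra.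
        apply (is_derive_scal (fun t => exp (- c * t)) y K). apply d_expl.
      + apply d_expl.
      + match goal with |- ?a = ?b => change (@eq R a b) end; ring.
    - intros y0 Hy0. apply Rmult_le_pos. specialize (Hg y0 ltac:(lra)). lra. apply Rlt_le, exp_pos. }
  assert (Hw0 : forall t, 0 <= t -> w 0 <= w t).
  { intros t Ht. apply Rnot_lt_le. intros Hlt.
    destruct (Req_dec t 0) as [->|Ht0]. lra.
    assert (Hrw : filterlim w (at_right 0) (locally (w 0))).
    { unfold w; cbv beta. replace (- c * 0) with 0 by ring. replace (a * 0) with 0 by ring.
      apply fl_mult; [apply fl_plus; [apply fl_plus|apply filterlim_const]|].
      - exact Hrc.
      - replace (K * exp 0) with ((fun t => K * exp (- c * t)) 0) by (f_equal; f_equal; ring).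
        apply rc_of_cont. apply (ex_derive_continuous (fun t => K * exp (- c * t))).
        eexists. apply (is_derive_scal (fun t => exp (- c * t))). apply d_expl.
      - replace (exp 0) with ((fun t => exp (a * t)) 0) by (f_equal; ring).
        apply rc_of_cont. apply (ex_derive_continuous (fun t => exp (a * t))). eexists. apply d_expl. }
    destruct (rc_eps w (w 0) Hrw (w 0 - w t) ltac:(lra)) as [d [Hdp Hdd]].
    set (s := Rmin (d/2) t).
    assert (0 < s) by (unfold s; apply Rmin_glb_lt; lra).
    assert (s <= t) by (unfold s; apply Rmin_r).
    assert (s < d) by (unfold s; generalize (Rmin_l (d/2) t); lra).
    specialize (Hdd s ltac:(lra)). specialize (Hw s t ltac:(lra) ltac:(lra)).
    apply Rabs_lt_between in Hdd. lra. }
  intros t Ht. specialize (Hw0 t Ht). unfold w in Hw0. cbv beta in Hw0.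
  replace (- c * 0) with 0 in Hw0 by ring. replace (a * 0) with 0 in Hw0 by ring.
  rewrite exp_0, Rmult_1_r, Rmult_1_r in Hw0.
  assert (He1 : exp (- a * t) * exp (a * t) = 1) by (rewrite <- exp_plus; replace (- a * t + a * t) with 0 by ring; apply exp_0).
  assert (0 < exp (- a * t)) by apply exp_pos.
  apply Rle_ge.
  apply Rmult_le_compat_r with (r := exp (- a * t)) in Hw0; [|lra].
  replace ((x t + K * exp (- c * t) + m) * exp (a * t) * exp (- a * t)) with (x t + K * exp (- c * t) + m) in Hw0.
  lra. rewrite Rmult_assoc, (Rmult_comm (exp (a*t))), He1. ring.
Qed.

Lemma mono2 (f df : R -> R) a b : a <= b ->
  (forall x, a < x < b -> is_derive f x (df x)) ->
  (forall x, a <= x <= b -> continuous f x) ->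
  (forall x, a < x < b -> 0 <= df x) -> f a <= f b.
Proof.
  intros Hab Hd Hc Hp.
  destruct (Req_dec a b) as [->|Hne]. lra.
  assert (pr1 : forall c, a < c < b -> derivable_pt f c).
  { intros c Hc'. exists (df c). apply is_derive_Reals. apply Hd; auto. }
  destruct (MVT f id a b pr1 (fun c _ => derivable_pt_id c) ltac:(lra)) as [c [P Heq]].
  - intros x Hx. apply continuity_pt_filterlim. apply Hc. lra.
  - intros x Hx. apply derivable_continuous_pt, derivable_pt_id.
  - rewrite derive_pt_id in Heq.
    assert (E : derive_pt f c (pr1 c P) = df c).
    { apply derive_pt_eq_0. apply is_derive_Reals. apply Hd. exact P. }
    rewrite E in Heq. unfold id in Heq. assert (0 <= df c) by (apply Hp; exact P). nra.
Qed.

Lemma barrier (u ud : R -> R) eps : 0 < eps -> (forall t, continuous u t) ->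
  (forall t, 0 < t -> is_derive u t (ud t)) -> 0 <= u 0 ->
  (forall t, 0 < t -> - eps < u t < 0 -> 0 <= ud t) -> forall t, 0 <= t -> 0 <= u t.
Proof.
  intros He Hc Hd H0 Hb t1 Ht1. apply Rnot_lt_le. intros Hneg.
  assert (Ht1p : 0 < t1). { destruct (Req_dec t1 0) as [->|]; lra. }
  set (E := fun s => 0 <= s <= t1 /\ 0 <= u s).
  assert (HbE : bound E). { exists t1. intros s [Hs _]. lra. }
  destruct (completeness E HbE (ex_intro _ 0 (conj (conj (Rle_refl 0) (Rlt_le _ _ Ht1p)) H0))) as [s0 [Hub Hlub]].
  assert (Hs0a : 0 <= s0). { apply Hub. split; [lra|auto]. }
  assert (Hs0b : s0 <= t1). { apply Hlub. intros s [Hs _]. lra. }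
  assert (Hu0 : 0 <= u s0).
  { apply Rnot_lt_le. intros Hlt.
    destruct (eps_of_cont u s0 (Hc s0) (- u s0) ltac:(lra)) as [d [Hdp Hdd]].
    assert (s0 <= s0 - d/2). 
    { apply Hlub. intros s [Hs Hus]. apply Rnot_lt_le. intros Hlt2.
      assert (s <= s0) by (apply Hub; split; auto).
      specialize (Hdd s). assert (Rabs (s - s0) < d) by (rewrite Rabs_left1; lra).
      specialize (Hdd H1). apply Rabs_lt_between in Hdd. lra. }
    lra. }
  assert (Hlt1 : s0 < t1). { destruct (Req_dec s0 t1) as [->|]; lra. }
  destruct (eps_of_cont u s0 (Hc s0) eps He) as [d [Hdp Hdd]].
  set (t2 := Rmin t1 (s0 + d/2)).
  assert (Ht2a : s0 < t2) by (unfold t2; apply Rmin_glb_lt; lra).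
  assert (Ht2b : t2 <= t1) by (unfold t2; apply Rmin_l).
  assert (Ht2c : t2 <= s0 + d/2) by (unfold t2; apply Rmin_r).
  assert (Hneg2 : forall s, s0 < s <= t1 -> u s < 0).
  { intros s Hs. apply Rnot_le_lt. intros Hpos.
    assert (s <= s0) by (apply Hub; split; [lra|auto]). lra. }
  assert (Hmid : u s0 <= u t2).
  { apply (mono2 u ud s0 t2); [lra| | |].
    - intros x Hx. apply Hd. lra.
    - intros x Hx. apply Hc.
    - intros x Hx. apply Hb. lra. split; [|apply Hneg2; lra].
      assert (Rabs (x - s0) < d) by (rewrite Rabs_pos_eq; lra).
      specialize (Hdd x H). apply Rabs_lt_between in Hdd. lra. }
  specialize (Hneg2 t2 ltac:(lra)). lra.
Qed.

Definition nrm (x : nat -> R) := Rabs (x 0%nat) + Rabs (x 1%nat) + Rabs (x 2%nat) + Rabs (x 3%nat).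

Definition Lip (G : (nat -> R) -> nat -> R) (L : R) :=
  forall x y j, Rabs (G x j - G y j) <= L * nrm (fun i => x i - y i).

Fixpoint X (G : (nat -> R) -> nat -> R) (x0 : nat -> R) (n : nat) (t : R) : nat -> R :=
  match n with
  | O => x0
  | S n => fun j => x0 j + RInt (fun s => G (X G x0 n s) j) 0 t
  end.

Lemma nrm_ge0 x : 0 <= nrm x.
Proof. unfold nrm. generalize (Rabs_pos (x 0%nat)) (Rabs_pos (x 1%nat)) (Rabs_pos (x 2%nat)) (Rabs_pos (x 3%nat)). lra. Qed.

Lemma Gcont G L (HL : Lip G L) (HLp : 0 < L) (y : R -> nat -> R) t j :
  (forall i, continuous (fun t => y t i) t) -> continuous (fun t => G (y t) j) t.
Proof.
  intros Hc. apply cont_of_eps. intros e He.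
  set (e' := e / (4 * L + 4)).
  assert (He' : 0 < e') by (unfold e'; apply Rdiv_lt_0_compat; lra).
  destruct (eps_of_cont _ _ (Hc 0%nat) e' He') as [d0 [Hd0 H0]].
  destruct (eps_of_cont _ _ (Hc 1%nat) e' He') as [d1 [Hd1 H1]].
  destruct (eps_of_cont _ _ (Hc 2%nat) e' He') as [d2 [Hd2 H2]].
  destruct (eps_of_cont _ _ (Hc 3%nat) e' He') as [d3 [Hd3 H3]].
  exists (Rmin (Rmin d0 d1) (Rmin d2 d3)). split.
  { repeat apply Rmin_glb_lt; auto. }
  intros s Hs.
  assert (Hs0 : Rabs (s - t) < d0) by (generalize (Rmin_l (Rmin d0 d1) (Rmin d2 d3)) (Rmin_l d0 d1); lra).
  assert (Hs1 : Rabs (s - t) < d1) by (generalize (Rmin_l (Rmin d0 d1) (Rmin d2 d3)) (Rmin_r d0 d1); lra).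
  assert (Hs2 : Rabs (s - t) < d2) by (generalize (Rmin_r (Rmin d0 d1) (Rmin d2 d3)) (Rmin_l d2 d3); lra).
  assert (Hs3 : Rabs (s - t) < d3) by (generalize (Rmin_r (Rmin d0 d1) (Rmin d2 d3)) (Rmin_r d2 d3); lra).
  eapply Rle_lt_trans. apply HL. unfold nrm.
  specialize (H0 s Hs0). specialize (H1 s Hs1). specialize (H2 s Hs2). specialize (H3 s Hs3).
  assert (e' * (4 * L + 4) = e) by (unfold e'; field; lra).
  assert (Rabs (y s 0%nat - y t 0%nat) + Rabs (y s 1%nat - y t 1%nat) + Rabs (y s 2%nat - y t 2%nat) + Rabs (y s 3%nat - y t 3%nat) < 4 * e') by lra.
  nra.
Qed.

Lemma dRInt (g : R -> R) t : (forall s, continuous g s) ->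
  is_derive (fun u => RInt g 0 u) t (g t).
Proof.
  intros Hc. apply (is_derive_RInt g (fun u => RInt g 0 u) 0 t).
  - apply filter_forall. intros b. apply (RInt_correct g 0 b). apply ex_RInt_continuous. intros; apply Hc.
  - apply Hc.
Qed.

Lemma X_cont_deriv G L x0 (HL : Lip G L) (HLp : 0 < L) n :
  (forall t j, continuous (fun t => X G x0 n t j) t) /\
  (forall t j, is_derive (fun t => X G x0 (S n) t j) t (G (X G x0 n t) j)).
Proof.
  induction n as [|n IH].
  - split.
    + intros t j. simpl. apply continuous_const.
    + intros t j. simpl. eapply d_eqv. apply (d_plus (fun _ => x0 j) (fun u => RInt (fun s => G x0 j) 0 u)).
      apply d_const. apply (dRInt (fun s => G x0 j)). intros; apply continuous_const. req.
  - destruct IH as [Hc Hd]. split.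
    + intros t j. apply (ex_derive_continuous (fun t => X G x0 (S n) t j)). eexists. apply Hd.
    + intros t j. simpl. eapply d_eqv. apply (d_plus (fun _ => x0 j) (fun u => RInt (fun s => G (X G x0 (S n) s) j) 0 u)).
      apply d_const. apply (dRInt (fun s => G (X G x0 (S n) s) j)). intros s.
      apply (Gcont G L HL HLp (X G x0 (S n))). intros i.
      apply (ex_derive_continuous (fun t => X G x0 (S n) t i)). eexists. apply Hd.
      simpl. req.
Qed.

Lemma DB (h dh : R -> R) C K t : 0 < K -> 0 <= t -> h 0 = 0 ->
  (forall s, 0 <= s <= t -> is_derive h s (dh s)) ->
  (forall s, 0 <= s <= t -> Rabs (dh s) <= C * exp (K * s)) ->
  Rabs (h t) <= C * exp (K * t) / K.
Proof.
  intros HK Ht H0 Hd Hb.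
  assert (HC : 0 <= C).
  { specialize (Hb 0 ltac:(lra)). rewrite Rmult_0_r, exp_0 in Hb. generalize (Rabs_pos (dh 0)); lra. }
  assert (A1 : C / K * exp (K * 0) - h 0 <= C / K * exp (K * t) - h t).
  { apply (mono (fun s => C / K * exp (K * s) - h s) (fun s => C * exp (K * s) - dh s)); auto.
    - intros x Hx. eapply d_eqv. apply (d_minus (fun s => C / K * exp (K * s)) h).
      + apply (is_derive_scal (fun s => exp (K * s)) x (C / K)). apply d_expl.
      + apply Hd; auto.
      + match goal with |- ?a = ?b => change (@eq R a b) end; field; lra.
    - intros x Hx. specialize (Hb x Hx). apply Rabs_le_between in Hb. lra. }
  assert (A2 : C / K * exp (K * 0) + h 0 <= C / K * exp (K * t) + h t).
  { apply (mono (fun s => C / K * exp (K * s) + h s) (fun s => C * exp (K * s) + dh s)); auto.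
    - intros x Hx. eapply d_eqv. apply (d_plus (fun s => C / K * exp (K * s)) h).
      + apply (is_derive_scal (fun s => exp (K * s)) x (C / K)). apply d_expl.
      + apply Hd; auto.
      + match goal with |- ?a = ?b => change (@eq R a b) end; field; lra.
    - intros x Hx. specialize (Hb x Hx). apply Rabs_le_between in Hb. lra. }
  rewrite H0, Rmult_0_r, exp_0 in A1, A2.
  assert (0 <= C / K) by (apply Rdiv_le_0_compat; lra).
  apply Rabs_le_between. unfold Rdiv in *. lra.
Qed.

Lemma X0 G x0 n j : X G x0 n 0 j = x0 j.
Proof. destruct n; simpl. reflexivity. rewrite RInt_point. apply Rplus_0_r. Qed.

Lemma lim_q a b C : (forall n, a <= b + C * (1/2)^n) -> a <= b.
Proof.
  intros H. apply Rnot_lt_le. intros Hlt.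
  destruct (pow_lt_1_zero (1/2) ltac:(rewrite Rabs_pos_eq; lra) ((a - b) / (Rabs C + 1))) as [N HN].
  { apply Rdiv_lt_0_compat. lra. generalize (Rabs_pos C); lra. }
  specialize (HN N (le_n N)). specialize (H N).
  assert (Hp : 0 <= (1/2)^N) by (apply pow_le; lra).
  rewrite Rabs_pos_eq in HN by exact Hp.
  assert (C * (1/2)^N <= Rabs C * (1/2)^N) by (apply Rmult_le_compat_r; [exact Hp| apply Rle_abs]).
  assert ((1/2)^N * (Rabs C + 1) < a - b).
  { apply (Rmult_lt_compat_r (Rabs C + 1)) in HN. 2: generalize (Rabs_pos C); lra.
    unfold Rdiv in HN. rewrite Rmult_assoc, Rinv_l in HN. lra. generalize (Rabs_pos C); lra. }
  nra.
Qed.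

Lemma lim_bound (u : nat -> R) (l a c : R) n : is_lim_seq u l ->
  (forall m, (n <= m)%nat -> Rabs (u m - a) <= c) -> Rabs (l - a) <= c.
Proof.
  intros Hl Hb. apply Rnot_lt_le. intros Hlt.
  apply is_lim_seq_spec in Hl.
  assert (Hl' : forall eps:posreal, eventually (fun n => Rabs (u n - l) < eps)) by exact Hl.
  destruct (Hl' (mkposreal ((Rabs (l - a) - c)/2) ltac:(lra))) as [N HN].
  specialize (HN (Nat.max N n) (Nat.le_max_l _ _)). specialize (Hb (Nat.max N n) (Nat.le_max_r _ _)).
  simpl in HN.
  assert (Rabs (l - a) <= Rabs (l - u (Nat.max N n)) + Rabs (u (Nat.max N n) - a)).
  { replace (l - a) with ((l - u (Nat.max N n)) + (u (Nat.max N n) - a)) by ring. apply Rabs_triang. }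
  rewrite Rabs_minus_sym in HN. lra.
Qed.

Lemma pow_half_mono n m : (n <= m)%nat -> (1/2)^m <= (1/2)^n.
Proof.
  intros H. replace m with (n + (m - n))%nat by lia. rewrite pow_add.
  assert (0 <= (1/2)^n) by (apply pow_le; lra).
  assert ((1/2)^(m-n) <= 1) by (apply Rle_trans with (1^(m-n)); [apply pow_incr; lra | rewrite pow1; lra]). nra.
Qed.

Section PicardSec.
Context (G : (nat -> R) -> nat -> R) (L B : R) (x0 : nat -> R)
  (HL : Lip G L) (HLp : 0 < L) (HB : forall x j, Rabs (G x j) <= B).

Let K := 8 * L.
Let A := 4 * B / K.
Let XX := X G x0.

Lemma B_ge0 : 0 <= B.
Proof. specialize (HB x0 0%nat). generalize (Rabs_pos (G x0 0%nat)). lra. Qed.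

Lemma Xstep n t j : 0 <= t -> Rabs (XX (S n) t j - XX n t j) <= A * (1/2)^n * exp (K * t) / 4.
Proof.
  revert t j. induction n as [|n IH]; intros t j Ht.
  - assert (HK : 0 < K) by (unfold K; lra).
    eapply Rle_trans.
    apply (DB (fun s => XX 1%nat s j - XX 0%nat s j) (fun s => G x0 j) B K t HK Ht).
    + unfold XX. rewrite !X0. ring.
    + intros s Hs. eapply d_eqv. apply (d_minus (fun s => XX 1%nat s j) (fun s => XX 0%nat s j)).
      apply (proj2 (X_cont_deriv G L x0 HL HLp 0%nat)). apply (d_ext (fun _ => x0 j)); [intros; reflexivity | apply d_const]. simpl. req.
    + intros s Hs. eapply Rle_trans. apply HB. assert (1 <= exp (K * s)).
      { generalize (exp_ineq1_le (K * s)). unfold K in *. nra. } generalize B_ge0. nra.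
    + unfold A. simpl. right. field. unfold K; lra.
  - assert (HK : 0 < K) by (unfold K; lra).
    eapply Rle_trans.
    apply (DB (fun s => XX (S (S n)) s j - XX (S n) s j) (fun s => G (XX (S n) s) j - G (XX n s) j) (L * (A * (1/2)^n)) K t HK Ht).
    + unfold XX. rewrite !X0. ring.
    + intros s Hs. apply (d_minus (fun s => XX (S (S n)) s j) (fun s => XX (S n) s j)).
      apply (proj2 (X_cont_deriv G L x0 HL HLp (S n))).
      apply (proj2 (X_cont_deriv G L x0 HL HLp n)).
    + intros s Hs. eapply Rle_trans. apply HL. unfold nrm.
      generalize (IH s 0%nat ltac:(lra)) (IH s 1%nat ltac:(lra)) (IH s 2%nat ltac:(lra)) (IH s 3%nat ltac:(lra)).
      intros. rewrite Rmult_assoc. apply Rmult_le_compat_l. lra. lra.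
    + right. simpl. unfold A, K. field. lra.
Qed.

Lemma Xcauchy n p t j : 0 <= t ->
  Rabs (XX (n + p)%nat t j - XX n t j) <= 2 * A * exp (K * t) * ((1/2)^n - (1/2)^(n+p)).
Proof.
  intros Ht. induction p as [|p IH].
  - rewrite Nat.add_0_r. replace (XX n t j - XX n t j) with 0 by ring. rewrite Rabs_R0. right; ring.
  - replace (n + S p)%nat with (S (n + p)) by lia.
    generalize (Xstep (n+p) t j Ht). intros Hs.
    assert (Rabs (XX (S (n + p)) t j - XX n t j) <= Rabs (XX (S (n + p)) t j - XX (n+p)%nat t j) + Rabs (XX (n+p)%nat t j - XX n t j)).
    { replace (XX (S (n + p)) t j - XX n t j) with ((XX (S (n + p)) t j - XX (n+p)%nat t j) + (XX (n+p)%nat t j - XX n t j)) by ring. apply Rabs_triang. }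
    change ((1/2)^(S (n+p))) with (1/2 * (1/2)^(n+p)).
    assert (0 <= A * (1/2)^(n+p) * exp (K * t)).
    { apply Rmult_le_pos. apply Rmult_le_pos. unfold A, K. apply Rdiv_le_0_compat. generalize B_ge0; lra. lra. apply pow_le; lra. apply Rlt_le, exp_pos. }
    nra.
Qed.

Lemma Xcv t j : 0 <= t -> ex_finite_lim_seq (fun n => XX n t j).
Proof.
  intros Ht. apply ex_lim_seq_cauchy_corr. intros eps.
  set (C := 2 * A * exp (K * t)).
  assert (HC : 0 <= C).
  { unfold C. apply Rmult_le_pos. unfold A, K. apply Rmult_le_pos. lra. apply Rdiv_le_0_compat. generalize B_ge0; lra. lra. apply Rlt_le, exp_pos. }
  destruct (pow_lt_1_zero (1/2) ltac:(rewrite Rabs_pos_eq; lra) (eps / (C + 1))) as [N HN].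
  { apply Rdiv_lt_0_compat. apply cond_pos. lra. }
  exists N. 
  assert (Hgen : forall n m, (N <= n)%nat -> (n <= m)%nat -> Rabs (XX n t j - XX m t j) < eps).
  { intros n m Hn Hm. replace m with (n + (m - n))%nat by lia.
    rewrite Rabs_minus_sym. eapply Rle_lt_trans. apply Xcauchy; auto. fold C.
    specialize (HN N (le_n N)). rewrite Rabs_pos_eq in HN by (apply pow_le; lra).
    assert ((1/2)^n <= (1/2)^N) by (apply pow_half_mono; auto).
    assert (0 <= (1/2)^(n + (m-n))) by (apply pow_le; lra).
    assert ((1/2)^N * (C+1) < eps).
    { apply (Rmult_lt_compat_r (C + 1)) in HN. 2: lra. unfold Rdiv in HN. rewrite Rmult_assoc, Rinv_l in HN; lra. }
    assert (C * (1/2)^n <= C * (1/2)^N) by (apply Rmult_le_compat_l; lra).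
    assert (0 <= C * (1/2)^(n+(m-n))) by (apply Rmult_le_pos; lra).
    assert (0 <= (1/2)^N) by (apply pow_le; lra).
    lra. }
  intros n m Hn Hm. destruct (Nat.le_ge_cases n m).
  apply Hgen; auto. rewrite Rabs_minus_sym. apply Hgen; auto.
Qed.

Definition Y t j := real (Lim_seq (fun n => XX n t j)).

Lemma Y_lim t j : 0 <= t -> is_lim_seq (fun n => XX n t j) (Y t j).
Proof.
  intros Ht. unfold Y. destruct (Xcv t j Ht) as [l Hl].
  rewrite (is_lim_seq_unique _ _ Hl). exact Hl.
Qed.

Lemma YB t n j : 0 <= t -> Rabs (Y t j - XX n t j) <= 2 * A * exp (K * t) * (1/2)^n.
Proof.
  intros Ht. apply (lim_bound (fun m => XX m t j) _ _ _ n (Y_lim t j Ht)).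
  intros m Hm. replace m with (n + (m - n))%nat by lia.
  eapply Rle_trans. apply Xcauchy; auto.
  assert (0 <= (1/2)^(n + (m-n))) by (apply pow_le; lra).
  assert (0 <= 2 * A * exp (K * t)).
  { apply Rmult_le_pos. unfold A, K. apply Rmult_le_pos. lra. apply Rdiv_le_0_compat. generalize B_ge0; lra. lra. apply Rlt_le, exp_pos. }
  nra.
Qed.

Lemma X_lip n t s j : Rabs (XX n t j - XX n s j) <= B * Rabs (t - s).
Proof.
  destruct n as [|n].
  - unfold XX; simpl. replace (x0 j - x0 j) with 0 by ring. rewrite Rabs_R0.
    apply Rmult_le_pos. apply B_ge0. apply Rabs_pos.
  - destruct (MVT_gen (fun t => XX (S n) t j) s t (fun u => G (XX n u) j)) as [c [_ Hc]].
    + intros x _. apply (proj2 (X_cont_deriv G L x0 HL HLp n)).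
    + intros x _. apply continuity_pt_filterlim. apply (proj1 (X_cont_deriv G L x0 HL HLp (S n))).
    + rewrite Hc, Rabs_mult. apply Rmult_le_compat_r. apply Rabs_pos. apply HB.
Qed.

Lemma Y_lip t s j : 0 <= t -> 0 <= s -> Rabs (Y t j - Y s j) <= B * Rabs (t - s).
Proof.
  intros Ht Hs.
  assert (HC : 0 <= 2 * A * exp (K * t) + 2 * A * exp (K * s)).
  { assert (0 <= A) by (unfold A, K; apply Rdiv_le_0_compat; generalize B_ge0; lra).
    generalize (exp_pos (K*t)) (exp_pos (K*s)). nra. }
  apply (lim_q _ _ (2 * A * exp (K * t) + 2 * A * exp (K * s))). intros n.
  generalize (YB t n j Ht) (YB s n j Hs) (X_lip n t s j). intros H1 H2 H3.
  assert (Rabs (Y t j - Y s j) <= Rabs (Y t j - XX n t j) + Rabs (XX n t j - XX n s j) + Rabs (XX n s j - Y s j)).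
  { replace (Y t j - Y s j) with ((Y t j - XX n t j) + (XX n t j - XX n s j) + (XX n s j - Y s j)) by ring.
    eapply Rle_trans. apply Rabs_triang. apply Rplus_le_compat_r. apply Rabs_triang. }
  rewrite Rabs_minus_sym in H2. lra.
Qed.

Definition Z t j := Y (Rmax t 0) j.

Lemma Rmax_lip t s : Rabs (Rmax t 0 - Rmax s 0) <= Rabs (t - s).
Proof. unfold Rmax. destruct (Rle_dec t 0), (Rle_dec s 0); apply Rabs_le_between;
  (destruct (Rle_dec 0 (t - s)); [rewrite (Rabs_pos_eq (t-s)) by lra | rewrite (Rabs_left (t-s)) by lra]); lra. Qed.

Lemma Z_cont t j : continuous (fun t => Z t j) t.
Proof.
  apply cont_of_eps. intros e He. exists (e / (B + 1)). split.
  apply Rdiv_lt_0_compat; generalize B_ge0; lra.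
  intros y Hy. unfold Z. eapply Rle_lt_trans. apply Y_lip; apply Rmax_r.
  eapply Rle_lt_trans. apply Rmult_le_compat_l. apply B_ge0. apply Rmax_lip.
  assert (Rabs (y - t) * (B + 1) < e).
  { apply (Rmult_lt_compat_r (B+1)) in Hy. unfold Rdiv in Hy. rewrite Rmult_assoc, Rinv_l in Hy.
    lra. generalize B_ge0; lra. generalize B_ge0; lra. }
  generalize (Rabs_pos (y - t)) B_ge0. nra.
Qed.

Lemma GZ_cont j s : continuous (fun s => G (Z s) j) s.
Proof. apply (Gcont G L HL HLp Z). intros i. apply Z_cont. Qed.

Lemma Z_int t j : 0 <= t -> Z t j = x0 j + RInt (fun s => G (Z s) j) 0 t.
Proof.
  intros Ht.
  assert (HK : 0 < K) by (unfold K; lra).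
  assert (HA : 0 <= A) by (unfold A, K; apply Rdiv_le_0_compat; generalize B_ge0; lra).
  cut (Rabs (Z t j - (x0 j + RInt (fun s => G (Z s) j) 0 t)) <= 0).
  { intros H. generalize (Rabs_pos (Z t j - (x0 j + RInt (fun s => G (Z s) j) 0 t))). intros.
    assert (Rabs (Z t j - (x0 j + RInt (fun s => G (Z s) j) 0 t)) = 0) by lra.
    apply Rabs_eq_0 in H1. lra. }
  apply (lim_q _ _ (2 * A * exp (K * t))). intros n. rewrite Rplus_0_l.
  assert (Hpsi : Rabs (XX (S n) t j - x0 j - RInt (fun s => G (Z s) j) 0 t) <= L * (4 * (2 * A * (1/2)^n)) * exp (K * t) / K).
  { apply (DB (fun u => XX (S n) u j - x0 j - RInt (fun s => G (Z s) j) 0 u) (fun u => G (XX n u) j - G (Z u) j)); auto.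
    - unfold XX. rewrite X0, RInt_point. change (x0 j - x0 j - 0 = 0). ring.
    - intros s Hs. eapply d_eqv.
      apply (d_minus (fun u => XX (S n) u j - x0 j) (fun u => RInt (fun s => G (Z s) j) 0 u)).
      apply (d_minus (fun u => XX (S n) u j) (fun _ => x0 j)).
      apply (proj2 (X_cont_deriv G L x0 HL HLp n)). apply d_const.
      apply dRInt. intros; apply GZ_cont. unfold XX. req.
    - intros s Hs. eapply Rle_trans. apply HL.
      assert (Hz : forall i, Rabs (XX n s i - Z s i) <= 2 * A * (1/2)^n * exp (K * s)).
      { intros i. unfold Z. rewrite Rmax_left by lra. rewrite Rabs_minus_sym.
        eapply Rle_trans. apply YB. lra. right. ring. }
      unfold nrm. generalize (Hz 0%nat) (Hz 1%nat) (Hz 2%nat) (Hz 3%nat). intros.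
      replace (L * (4 * (2 * A * (1 / 2) ^ n)) * exp (K * s)) with (L * (4 * (2 * A * (1 / 2) ^ n * exp (K * s)))) by ring.
      apply Rmult_le_compat_l. lra. lra. }
  generalize (YB t (S n) j Ht). intros HY. unfold Z. rewrite Rmax_left by lra.
  assert (Rabs (Y t j - (x0 j + RInt (fun s => G (Z s) j) 0 t)) <= Rabs (Y t j - XX (S n) t j) + Rabs (XX (S n) t j - x0 j - RInt (fun s => G (Z s) j) 0 t)).
  { replace (Y t j - (x0 j + RInt (fun s => G (Z s) j) 0 t)) with ((Y t j - XX (S n) t j) + (XX (S n) t j - x0 j - RInt (fun s => G (Z s) j) 0 t)) by ring. apply Rabs_triang. }
  unfold Z in *. simpl pow in HY.
  replace (L * (4 * (2 * A * (1 / 2) ^ n)) * exp (K * t) / K) with (A * (1/2)^n * exp (K * t)) in Hpsi by (unfold K; field; lra).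
  lra.
Qed.

Theorem picard_main : exists Zf : R -> nat -> R, (forall j, Zf 0 j = x0 j) /\
  (forall t j, continuous (fun t => Zf t j) t) /\
  (forall t j, 0 < t -> is_derive (fun t => Zf t j) t (G (Zf t) j)).
Proof.
  exists Z. split; [|split].
  - intros j. rewrite Z_int by lra. rewrite RInt_point. apply Rplus_0_r.
  - apply Z_cont.
  - intros t j Ht. apply (is_derive_ext_loc (fun u => x0 j + RInt (fun s => G (Z s) j) 0 u)).
    + exists (mkposreal t Ht). intros y Hy. assert (Hy' : Rabs (y - t) < t) by exact Hy.
      apply Rabs_lt_between in Hy'. symmetry. apply Z_int. lra.
    + eapply d_eqv. apply (d_plus (fun _ => x0 j) (fun u => RInt (fun s => G (Z s) j) 0 u)).
      apply d_const. apply dRInt. intros; apply GZ_cont. req.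
Qed.
End PicardSec.

Theorem picard G L B x0 : Lip G L -> 0 < L -> (forall x j, Rabs (G x j) <= B) ->
  exists Zf : R -> nat -> R, (forall j, Zf 0 j = x0 j) /\
  (forall t j, continuous (fun t => Zf t j) t) /\
  (forall t j, 0 < t -> is_derive (fun t => Zf t j) t (G (Zf t) j)).
Proof. intros; eapply picard_main; eauto. Qed.

Lemma archi_nat x : exists n : nat, x <= INR n.
Proof.
  destruct (archimed x) as [H1 _].
  destruct (Z_lt_le_dec (up x) 0) as [Hn|Hp].
  - exists 0%nat. simpl. apply IZR_lt in Hn. lra.
  - exists (Z.to_nat (up x)). rewrite INR_IZR_INZ, Z2Nat.id by exact Hp. lra.
Qed.

Lemma cont2_eps (g : R -> R -> R) u v :
  continuous (fun p : R * R => g (fst p) (snd p)) (u, v) ->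
  forall e, 0 < e -> exists d, 0 < d /\ forall x y, Rabs (x - u) < d -> Rabs (y - v) < d -> Rabs (g x y - g u v) < e.
Proof.
  intros H e He.
  destruct (proj1 (filterlim_locally _ _) H (mkposreal e He)) as [d Hd].
  exists d. split. apply cond_pos. intros x y Hx Hy.
  apply (Hd (x, y)). split; [exact Hx| exact Hy].
Qed.

Lemma bound2d (g : R -> R -> R) M : 0 <= M ->
  (forall s i, continuous (fun p : R * R => g (fst p) (snd p)) (s, i)) ->
  exists P, forall s i, 0 <= s <= M -> 0 <= i <= M -> Rabs (g s i) <= P.
Proof.
  intros HM Hc.
  assert (Hd : forall u v, exists d : posreal, forall x y, Rabs (x - u) < d -> Rabs (y - v) < d -> Rabs (g x y - g u v) < 1).
  { intros u v. destruct (cont2_eps g u v (Hc u v) 1 ltac:(lra)) as [d [Hd1 Hd2]].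
    exists (mkposreal d Hd1). exact Hd2. }
  set (delta := fun u v => proj1_sig (constructive_indefinite_description _ (Hd u v))).
  assert (Hdelta : forall u v x y, Rabs (x - u) < delta u v -> Rabs (y - v) < delta u v -> Rabs (g x y - g u v) < 1).
  { intros u v. unfold delta. destruct (constructive_indefinite_description _ (Hd u v)) as [d Hdd]. exact Hdd. }
  set (d2 := fun u v => mkposreal (delta u v / 2) ltac:(generalize (cond_pos (delta u v)); lra)).
  destruct (compactness_value_2d 0 M 0 M d2) as [d Hcv].
  assert (Hunif : forall x y x' y', 0 <= x <= M -> 0 <= y <= M -> Rabs (x - x') < d -> Rabs (y - y') < d ->
     Rabs (g x' y' - g x y) < 2).
  { intros x y x' y' Hx Hy Hxx Hyy. apply NNPP. intros Hn.
    apply (Hcv x y Hx Hy). intros [u [v [Hu [Hv [Hxu [Hyv Hdu]]]]]].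
    apply Hn.
    assert (Hxu' : Rabs (x - u) < delta u v / 2) by exact Hxu.
    assert (Hyv' : Rabs (y - v) < delta u v / 2) by exact Hyv.
    assert (Hdu' : d <= delta u v / 2) by exact Hdu.
    assert (Hdp : 0 < delta u v) by apply cond_pos.
    clear Hxu Hyv Hdu.
    assert (A1 : Rabs (g x y - g u v) < 1) by (apply Hdelta; lra).
    assert (Rabs (x' - u) < delta u v).
    { replace (x' - u) with ((x' - x) + (x - u)) by ring. eapply Rle_lt_trans. apply Rabs_triang.
      rewrite Rabs_minus_sym in Hxx. lra. }
    assert (Rabs (y' - v) < delta u v).
    { replace (y' - v) with ((y' - y) + (y - v)) by ring. eapply Rle_lt_trans. apply Rabs_triang.
      rewrite Rabs_minus_sym in Hyy. lra. }
    assert (A2 : Rabs (g x' y' - g u v) < 1) by (apply Hdelta; lra).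
    replace (g x' y' - g x y) with ((g x' y' - g u v) - (g x y - g u v)) by ring.
    eapply Rle_lt_trans. apply Rabs_triang. rewrite Rabs_Ropp. lra. }
  assert (Hch : forall n : nat, forall x y, 0 <= x <= M -> 0 <= y <= M -> x <= INR n * (d/2) -> y <= INR n * (d/2) ->
    Rabs (g x y) <= Rabs (g 0 0) + 2 * INR n).
  { induction n as [|n IH]; intros x y Hx Hy Hxn Hyn.
    - simpl in *. replace x with 0 by lra. replace y with 0 by lra. lra.
    - rewrite S_INR in *.
      set (x' := Rmax 0 (x - d/2)). set (y' := Rmax 0 (y - d/2)).
      assert (Hd0 : 0 < d) by apply cond_pos.
      assert (Hx' : 0 <= x' <= M) by (unfold x'; split; [apply Rmax_l| apply Rmax_lub; lra]).
      assert (Hy' : 0 <= y' <= M) by (unfold y'; split; [apply Rmax_l| apply Rmax_lub; lra]).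
      assert (Hxn' : x' <= INR n * (d/2)) by (unfold x'; apply Rmax_lub; [apply Rmult_le_pos; [apply pos_INR|lra] | lra]).
      assert (Hyn' : y' <= INR n * (d/2)) by (unfold y'; apply Rmax_lub; [apply Rmult_le_pos; [apply pos_INR|lra] | lra]).
      assert (Rabs (x' - x) < d).
      { unfold x'. unfold Rmax. destruct (Rle_dec 0 (x - d/2)); apply Rabs_lt_between; lra. }
      assert (Rabs (y' - y) < d).
      { unfold y'. unfold Rmax. destruct (Rle_dec 0 (y - d/2)); apply Rabs_lt_between; lra. }
      specialize (IH x' y' Hx' Hy' Hxn' Hyn').
      specialize (Hunif x' y' x y Hx' Hy' H H0).
      assert (Rabs (g x y) <= Rabs (g x' y') + Rabs (g x y - g x' y')).
      { replace (g x y) with (g x' y' + (g x y - g x' y')) at 1 by ring. apply Rabs_triang. }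
      lra. }
  destruct (archi_nat (M / (d/2))) as [n Hn].
  exists (Rabs (g 0 0) + 2 * INR n). intros s i Hs Hi.
  assert (Hd0 : 0 < d) by apply cond_pos.
  assert (M <= INR n * (d/2)).
  { apply (Rmult_le_compat_r (d/2)) in Hn. unfold Rdiv in Hn at 1. rewrite Rmult_assoc, Rinv_l in Hn; lra. lra. }
  apply Hch; lra.
Qed.

Lemma mvt_bound (f df : R -> R) a a' P :
  (forall x, Rmin a a' <= x <= Rmax a a' -> is_derive f x (df x)) ->
  (forall x, Rmin a a' <= x <= Rmax a a' -> Rabs (df x) <= P) ->
  Rabs (f a' - f a) <= P * Rabs (a' - a).
Proof.
  intros Hd Hb. destruct (MVT_gen f a a' df) as [c [Hc Heq]].
  - intros x Hx. apply Hd. lra.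
  - intros x Hx. apply continuity_pt_filterlim. apply (ex_derive_continuous f x). exists (df x). apply Hd. exact Hx.
  - rewrite Heq, Rabs_mult. apply Rmult_le_compat_r. apply Rabs_pos. apply Hb. exact Hc.
Qed.

Lemma in_box_minmax a a' M : 0 <= a <= M -> 0 <= a' <= M -> forall x, Rmin a a' <= x <= Rmax a a' -> 0 <= x <= M.
Proof. intros Ha Ha' x Hx. unfold Rmin, Rmax in Hx. destruct (Rle_dec a a'); lra. Qed.

Lemma F_lip (F : R -> R -> R) M : 0 <= M -> C1_2d F ->
  exists LF, 0 < LF /\ forall a b a' b', 0 <= a <= M -> 0 <= b <= M -> 0 <= a' <= M -> 0 <= b' <= M ->
    Rabs (F a' b' - F a b) <= LF * (Rabs (a' - a) + Rabs (b' - b)).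
Proof.
  intros HM HC.
  destruct (bound2d (dS F) M HM) as [P1 HP1].
  { intros s i. apply (HC s i). }
  destruct (bound2d (dI F) M HM) as [P2 HP2].
  { intros s i. apply (HC s i). }
  exists (Rabs P1 + Rabs P2 + 1). split. generalize (Rabs_pos P1) (Rabs_pos P2); lra.
  intros a b a' b' Ha Hb Ha' Hb'.
  assert (E1 : Rabs (F a' b - F a b) <= P1 * Rabs (a' - a)).
  { apply (mvt_bound (fun s => F s b) (fun s => dS F s b)).
    - intros x _. unfold dS. apply Derive_correct. apply (HC x b).
    - intros x Hx. apply HP1; [eapply in_box_minmax; [exact Ha| exact Ha'| exact Hx] | exact Hb]. }
  assert (E2 : Rabs (F a' b' - F a' b) <= P2 * Rabs (b' - b)).
  { apply (mvt_bound (fun i => F a' i) (fun i => dI F a' i)).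
    - intros x _. unfold dI. apply Derive_correct. apply (HC a' x).
    - intros x Hx. apply HP2; [exact Ha' | eapply in_box_minmax; [exact Hb| exact Hb'| exact Hx]]. }
  assert (Rabs (F a' b' - F a b) <= Rabs (F a' b' - F a' b) + Rabs (F a' b - F a b)).
  { replace (F a' b' - F a b) with ((F a' b' - F a' b) + (F a' b - F a b)) by ring. apply Rabs_triang. }
  assert (P1 * Rabs (a' - a) <= Rabs P1 * Rabs (a' - a)) by (apply Rmult_le_compat_r; [apply Rabs_pos| apply Rle_abs]).
  assert (P2 * Rabs (b' - b) <= Rabs P2 * Rabs (b' - b)) by (apply Rmult_le_compat_r; [apply Rabs_pos| apply Rle_abs]).
  generalize (Rabs_pos (a' - a)) (Rabs_pos (b' - b)) (Rabs_pos P1) (Rabs_pos P2). intros.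
  assert (0 <= (Rabs P2 + 1) * Rabs (a'-a)) by (apply Rmult_le_pos; lra).
  assert (0 <= (Rabs P1 + 1) * Rabs (b'-b)) by (apply Rmult_le_pos; lra).
  lra.
Qed.

Section Inc.
Context (F f : R -> R -> R) (HF : incidence_hyp F f).

Lemma inc_nn s i : 0 <= s -> 0 <= i -> 0 <= F s i /\ 0 <= f s i.
Proof. destruct HF as [_ [_ [_ [Hnn _]]]]. apply Hnn. Qed.
Lemma inc_eq s i : 0 <= s -> 0 <= i -> F s i = i * f s i.
Proof. destruct HF as [_ [_ [Heq _]]]. apply Heq. Qed.
Lemma inc_0i i : 0 <= i -> F 0 i = 0.
Proof. destruct HF as [_ [_ [_ [_ [H _]]]]]. apply H. Qed.
Lemma inc_s0 s : 0 <= s -> F s 0 = 0.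
Proof. destruct HF as [_ [_ [_ [_ [_ [H _]]]]]]. apply H. Qed.
Lemma inc_C1F : C1_2d F.
Proof. destruct HF as [[H _] _]. exact H. Qed.
Lemma inc_C1f : C1_2d f.
Proof. destruct HF as [_ [[H _] _]]. exact H. Qed.

Lemma inc_mono_s s s' i : 0 <= s <= s' -> 0 <= i -> f s i <= f s' i.
Proof.
  intros Hs Hi. destruct HF as [_ [_ [_ [_ [_ [_ [H2 _]]]]]]].
  apply (mono (fun s => f s i) (fun s => dS f s i)). lra.
  - intros x _. unfold dS. apply Derive_correct. apply (inc_C1f x i).
  - intros x Hx. apply Rlt_le. apply (H2 x i); lra.
Qed.

Lemma inc_mono_i s i i' : 0 <= s -> 0 <= i <= i' -> f s i' <= f s i.
Proof.
  intros Hs Hi. destruct HF as [_ [_ [_ [_ [_ [_ [H2 _]]]]]]].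
  cut (- f s i <= - f s i'). lra.
  apply (mono (fun i => - f s i) (fun i => - dI f s i)). lra.
  - intros x _. apply (is_derive_opp (fun i => f s i)). unfold dI. apply Derive_correct. apply (inc_C1f s x).
  - intros x Hx. generalize (proj2 (H2 s x ltac:(lra) ltac:(lra))). lra.
Qed.

Lemma inc_fcont s i : continuous (fun p : R * R => f (fst p) (snd p)) (s, i).
Proof. apply (inc_C1f s i). Qed.

Lemma inc_sigma s : 0 <= s -> dI F s 0 = f s 0.
Proof.
  intros Hs.
  assert (Hd : is_derive (fun i => F s i) 0 (dI F s 0)).
  { unfold dI. apply Derive_correct. apply (inc_C1F s 0). }
  apply is_derive_Reals in Hd.
  set (l := dI F s 0) in *.
  apply Rminus_diag_uniq. apply Rabs_eq_0.
  apply Rle_antisym; [|apply Rabs_pos].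
  apply Rnot_lt_le. intros Hlt. set (e := Rabs (l - f s 0) / 2).
  assert (He : 0 < e) by (unfold e; lra).
  destruct (Hd e He) as [d1 Hd1].
  destruct (cont2_eps f s 0 (inc_fcont s 0) e He) as [d2 [Hd2p Hd2]].
  set (h := Rmin (d1/2) (d2/2)).
  assert (Hd1p : 0 < d1) by apply cond_pos.
  assert (Hh : 0 < h) by (unfold h; apply Rmin_glb_lt; lra).
  assert (Hh1 : Rabs h < d1) by (rewrite Rabs_pos_eq by lra; unfold h; generalize (Rmin_l (d1/2) (d2/2)); lra).
  assert (Hh2 : Rabs (h - 0) < d2) by (rewrite Rminus_0_r, Rabs_pos_eq by lra; unfold h; generalize (Rmin_r (d1/2) (d2/2)); lra).
  specialize (Hd1 h ltac:(lra) Hh1). rewrite Rplus_0_l in Hd1.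
  rewrite (inc_eq s h Hs ltac:(lra)), (inc_s0 s Hs) in Hd1.
  replace ((h * f s h - 0) / h) with (f s h) in Hd1 by (field; lra).
  specialize (Hd2 s h ltac:(rewrite Rminus_diag, Rabs_R0; lra) Hh2).
  assert (Rabs (l - f s 0) <= Rabs (f s h - l) + Rabs (f s h - f s 0)).
  { replace (l - f s 0) with (- (f s h - l) + (f s h - f s 0)) by ring.
    eapply Rle_trans. apply Rabs_triang. rewrite Rabs_Ropp. lra. }
  unfold e in *. lra.
Qed.
End Inc.

Definition clp (M y : R) := Rmin M (Rmax 0 y).

Lemma cl_range M y : 0 <= M -> 0 <= clp M y <= M.
Proof. intros HM. unfold clp, Rmin, Rmax. repeat destruct Rle_dec; lra. Qed.
Lemma cl_lip M a b : 0 <= M -> Rabs (clp M a - clp M b) <= Rabs (a - b).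
Proof. intros HM. unfold clp, Rmin, Rmax. repeat destruct Rle_dec; apply Rabs_le_between;
  (destruct (Rle_dec 0 (a - b)); [rewrite (Rabs_pos_eq (a-b)) by lra | rewrite (Rabs_left (a-b)) by lra]); lra. Qed.
Lemma cl_id M y : 0 <= y <= M -> clp M y = y.
Proof. intros H. unfold clp, Rmin, Rmax. repeat destruct Rle_dec; lra. Qed.
Lemma cl_neg M y : 0 <= M -> y <= 0 -> clp M y = 0.
Proof. intros HM H. unfold clp, Rmin, Rmax. repeat destruct Rle_dec; lra. Qed.
Lemma cl_idem M y : 0 <= M -> clp M (clp M y) = clp M y.
Proof. intros HM. apply cl_id. apply cl_range. exact HM. Qed.

Lemma prod_lip M x x' y y' : 0 <= x <= M -> 0 <= x' <= M -> 0 <= y <= M -> 0 <= y' <= M ->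
  Rabs (x * y - x' * y') <= M * (Rabs (x - x') + Rabs (y - y')).
Proof.
  intros Hx Hx' Hy Hy'.
  replace (x * y - x' * y') with (y * (x - x') + x' * (y - y')) by ring.
  eapply Rle_trans. apply Rabs_triang. rewrite !Rabs_mult.
  rewrite (Rabs_pos_eq y), (Rabs_pos_eq x') by lra.
  generalize (Rabs_pos (x - x')) (Rabs_pos (y - y')). nra.
Qed.

Lemma nrm_le x : forall i, (i < 4)%nat -> Rabs (x i) <= nrm x.
Proof.
  intros i Hi. unfold nrm.
  generalize (Rabs_pos (x 0%nat)) (Rabs_pos (x 1%nat)) (Rabs_pos (x 2%nat)) (Rabs_pos (x 3%nat)).
  destruct i as [|[|[|[|i]]]]; intros; try lra. lia.
Qed.

Section Model.
Context (Lam mu r k gam1 gam2 v1 v2 : R) (F1 f1 F2 f2 : R -> R -> R)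
  (HLam : 0 < Lam) (Hmu : 0 < mu) (Hr : 0 < r) (Hk : 0 < k)
  (Hgam1 : 0 < gam1) (Hgam2 : 0 < gam2) (Hv1 : 0 <= v1) (Hv2 : 0 <= v2)
  (HF1 : incidence_hyp F1 f1) (HF2 : incidence_hyp F2 f2).

Definition Mx := Lam / mu + 2.
Definition cl := clp Mx.
Definition lm := lam r mu.
Definition a1 := alpha gam1 v1 mu.
Definition a2 := alpha gam2 v2 mu.

Lemma Mx_pos : 0 < Mx.
Proof. unfold Mx. assert (0 < Lam / mu) by (apply Rdiv_lt_0_compat; lra). lra. Qed.
Lemma lm_pos : 0 < lm.
Proof. unfold lm, lam. lra. Qed.
Lemma a1_ge : mu < a1.
Proof. unfold a1, alpha. lra. Qed.
Lemma a2_ge : mu < a2.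
Proof. unfold a2, alpha. lra. Qed.

Definition Gf (x : nat -> R) (j : nat) : R :=
  match j with
  | O => Lam - F1 (cl (x 0%nat)) (cl (x 2%nat)) - F2 (cl (x 0%nat)) (cl (x 3%nat)) - lm * cl (x 0%nat)
  | S O => r * cl (x 0%nat) - (mu + k * cl (x 3%nat)) * cl (x 1%nat)
  | S (S O) => F1 (cl (x 0%nat)) (cl (x 2%nat)) - a1 * cl (x 2%nat)
  | S (S (S O)) => F2 (cl (x 0%nat)) (cl (x 3%nat)) + k * cl (x 3%nat) * cl (x 1%nat) - a2 * cl (x 3%nat)
  | _ => 0
  end.

Lemma Gf_lip : exists Lg, 0 < Lg /\ Lip Gf Lg.
Proof.
  assert (HM := Mx_pos).
  destruct (F_lip F1 Mx ltac:(lra) (inc_C1F F1 f1 HF1)) as [LF1 [HL1p HL1]].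
  destruct (F_lip F2 Mx ltac:(lra) (inc_C1F F2 f2 HF2)) as [LF2 [HL2p HL2]].
  assert (Hlm := lm_pos). assert (Ha1 := a1_ge). assert (Ha2 := a2_ge).
  exists (LF1 + LF2 + lm + r + mu + 2 * k * Mx + a1 + a2 + 1). split. nra.
  intros x y j.
  set (D := nrm (fun i => x i - y i)).
  assert (HD : forall i, (i < 4)%nat -> Rabs (cl (x i) - cl (y i)) <= Rabs (x i - y i)).
  { intros i _. apply cl_lip. lra. }
  assert (HR : forall i, 0 <= cl (x i) <= Mx) by (intros; apply cl_range; lra).
  assert (HR' : forall i, 0 <= cl (y i) <= Mx) by (intros; apply cl_range; lra).
  assert (HDn : 0 <= D) by apply nrm_ge0.
  assert (E : Rabs (x 0%nat - y 0%nat) + Rabs (x 1%nat - y 1%nat) + Rabs (x 2%nat - y 2%nat) + Rabs (x 3%nat - y 3%nat) = D) by reflexivity.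
  generalize (HD 0%nat ltac:(lia)) (HD 1%nat ltac:(lia)) (HD 2%nat ltac:(lia)) (HD 3%nat ltac:(lia)).
  generalize (Rabs_pos (x 0%nat - y 0%nat)) (Rabs_pos (x 1%nat - y 1%nat)) (Rabs_pos (x 2%nat - y 2%nat)) (Rabs_pos (x 3%nat - y 3%nat)).
  intros P0 P1 P2 P3 D0 D1 D2 D3.
  set (c0 := cl (x 0%nat)) in *. set (c1 := cl (x 1%nat)) in *. set (c2 := cl (x 2%nat)) in *. set (c3 := cl (x 3%nat)) in *.
  set (d0 := cl (y 0%nat)) in *. set (d1 := cl (y 1%nat)) in *. set (d2 := cl (y 2%nat)) in *. set (d3 := cl (y 3%nat)) in *.
  assert (R0 := HR 0%nat). assert (R1 := HR 1%nat). assert (R2 := HR 2%nat). assert (R3 := HR 3%nat).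
  assert (S0 := HR' 0%nat). assert (S1 := HR' 1%nat). assert (S2 := HR' 2%nat). assert (S3 := HR' 3%nat).
  fold c0 c1 c2 c3 d0 d1 d2 d3 in R0, R1, R2, R3, S0, S1, S2, S3.
  assert (B1 := HL1 d0 d2 c0 c2 S0 S2 R0 R2).
  assert (B2 := HL2 d0 d3 c0 c3 S0 S3 R0 R3).
  assert (B3 := prod_lip Mx c3 d3 c1 d1 R3 S3 R1 S1).
  assert (U0 : Rabs (c0 - d0) <= D) by lra.
  assert (U1 : Rabs (c1 - d1) <= D) by lra.
  assert (U2 : Rabs (c2 - d2) <= D) by lra.
  assert (U3 : Rabs (c3 - d3) <= D) by lra.
  assert (Q1 : LF1 * (Rabs (c0 - d0) + Rabs (c2 - d2)) <= LF1 * D) by (apply Rmult_le_compat_l; lra).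
  assert (Q2 : LF2 * (Rabs (c0 - d0) + Rabs (c3 - d3)) <= LF2 * D) by (apply Rmult_le_compat_l; lra).
  assert (Q3 : Mx * (Rabs (c3 - d3) + Rabs (c1 - d1)) <= Mx * D) by (apply Rmult_le_compat_l; lra).
  assert (V0 : forall c, 0 <= c -> c * Rabs (c0 - d0) <= c * D) by (intros; apply Rmult_le_compat_l; lra).
  assert (V1 : forall c, 0 <= c -> c * Rabs (c1 - d1) <= c * D) by (intros; apply Rmult_le_compat_l; lra).
  assert (V2 : forall c, 0 <= c -> c * Rabs (c2 - d2) <= c * D) by (intros; apply Rmult_le_compat_l; lra).
  assert (V3 : forall c, 0 <= c -> c * Rabs (c3 - d3) <= c * D) by (intros; apply Rmult_le_compat_l; lra).
  assert (W : forall a b c : R, Rabs (a + b + c) <= Rabs a + Rabs b + Rabs c).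
  { intros a b c. eapply Rle_trans. apply Rabs_triang. generalize (Rabs_triang a b). lra. }
  assert (Pos : 0 <= (r + mu + k * Mx + a1 + a2 + 1) * D) by (apply Rmult_le_pos; nra).
  assert (Pos2 : 0 <= LF1 * D /\ 0 <= LF2 * D /\ 0 <= lm * D /\ 0 <= k * Mx * D /\ 0 <= r * D /\ 0 <= mu * D /\ 0 <= a1 * D /\ 0 <= a2 * D) by (repeat split; apply Rmult_le_pos; nra).
  destruct j as [|[|[|[|j]]]]; unfold Gf; fold c0 c1 c2 c3 d0 d1 d2 d3.
  - replace (Lam - F1 c0 c2 - F2 c0 c3 - lm * c0 - (Lam - F1 d0 d2 - F2 d0 d3 - lm * d0))
      with (-(F1 c0 c2 - F1 d0 d2) + -(F2 c0 c3 - F2 d0 d3) + -(lm * (c0 - d0))) by ring.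
    eapply Rle_trans. apply W. rewrite !Rabs_Ropp, Rabs_mult, (Rabs_pos_eq lm) by lra.
    generalize (V0 lm ltac:(lra)). lra.
  - replace (r * c0 - (mu + k * c3) * c1 - (r * d0 - (mu + k * d3) * d1))
      with (r * (c0 - d0) + -(mu * (c1 - d1)) + -(k * (c3 * c1 - d3 * d1))) by ring.
    eapply Rle_trans. apply W. rewrite !Rabs_Ropp, !Rabs_mult, (Rabs_pos_eq r), (Rabs_pos_eq mu), (Rabs_pos_eq k) by lra.
    generalize (V0 r ltac:(lra)) (V1 mu ltac:(lra)).
    assert (k * Rabs (c3 * c1 - d3 * d1) <= k * (Mx * D)) by (apply Rmult_le_compat_l; lra).
    lra.
  - replace (F1 c0 c2 - a1 * c2 - (F1 d0 d2 - a1 * d2))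
      with ((F1 c0 c2 - F1 d0 d2) + -(a1 * (c2 - d2)) + 0) by ring.
    eapply Rle_trans. apply W. rewrite !Rabs_Ropp, Rabs_mult, (Rabs_pos_eq a1), Rabs_R0 by lra.
    generalize (V2 a1 ltac:(lra)). lra.
  - replace (F2 c0 c3 + k * c3 * c1 - a2 * c3 - (F2 d0 d3 + k * d3 * d1 - a2 * d3))
      with ((F2 c0 c3 - F2 d0 d3) + k * (c3 * c1 - d3 * d1) + -(a2 * (c3 - d3))) by ring.
    eapply Rle_trans. apply W. rewrite !Rabs_Ropp, !Rabs_mult, (Rabs_pos_eq a2), (Rabs_pos_eq k) by lra.
    generalize (V3 a2 ltac:(lra)).
    assert (k * Rabs (c3 * c1 - d3 * d1) <= k * (Mx * D)) by (apply Rmult_le_compat_l; lra).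
    lra.
  - rewrite Rminus_0_r, Rabs_R0. nra.
Qed.

Lemma cont_plus_R (f g : R -> R) x : continuous f x -> continuous g x -> continuous (fun t => f t + g t) x.
Proof. intros. apply (continuous_plus f g x); auto. Qed.
Lemma cont_minus_R (f g : R -> R) x : continuous f x -> continuous g x -> continuous (fun t => f t - g t) x.
Proof. intros. apply (continuous_minus f g x); auto. Qed.

Lemma Gf_bound : exists Lg Bg, 0 < Lg /\ Lip Gf Lg /\ forall x j, Rabs (Gf x j) <= Bg.
Proof.
  destruct Gf_lip as [Lg [HLg HL]]. exists Lg, (Lg * (4 * Mx) + Lam). split; [auto|split; [auto|]].
  intros x j. assert (HM := Mx_pos). assert (HM0 : 0 <= Mx) by lra.
  assert (Hid : Gf x j = Gf (fun i => cl (x i)) j).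
  { unfold Gf, cl. rewrite !(fun y => cl_idem Mx y HM0). reflexivity. }
  rewrite Hid. set (x' := fun i => cl (x i)).
  set (z := fun _ : nat => 0).
  assert (Hz : Rabs (Gf z j) <= Lam).
  { assert (cl 0 = 0) by (apply cl_id; lra).
    destruct j as [|[|[|[|j]]]]; unfold Gf, z; cbv beta; rewrite ?H.
    - rewrite (inc_0i F1 f1 HF1 0), (inc_0i F2 f2 HF2 0) by lra. rewrite Rabs_pos_eq; lra.
    - rewrite Rabs_pos_eq; nra.
    - rewrite (inc_0i F1 f1 HF1 0) by lra. rewrite Rabs_pos_eq; nra.
    - rewrite (inc_0i F2 f2 HF2 0) by lra. rewrite Rabs_pos_eq; nra.
    - rewrite Rabs_R0; lra. }
  assert (Hn : nrm (fun i => x' i - z i) <= 4 * Mx).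
  { unfold nrm, x', z. rewrite !Rminus_0_r.
    assert (forall i, Rabs (cl (x i)) <= Mx).
    { intros i. unfold cl. generalize (cl_range Mx (x i) HM0). intros. rewrite Rabs_pos_eq; lra. }
    generalize (H 0%nat) (H 1%nat) (H 2%nat) (H 3%nat). lra. }
  assert (Rabs (Gf x' j) <= Rabs (Gf x' j - Gf z j) + Rabs (Gf z j)).
  { replace (Gf x' j) with ((Gf x' j - Gf z j) + Gf z j) at 1 by ring. apply Rabs_triang. }
  generalize (HL x' z j). intros.
  assert (Lg * nrm (fun i => x' i - z i) <= Lg * (4 * Mx)) by (apply Rmult_le_compat_l; lra).
  lra.
Qed.

Definition sumN (Zf : R -> nat -> R) t := Zf t 0%nat + Zf t 1%nat + Zf t 2%nat + Zf t 3%nat.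

Lemma exist_sol (x0 : nat -> R) :
  (forall i, (i < 4)%nat -> 0 <= x0 i) -> x0 0%nat + x0 1%nat + x0 2%nat + x0 3%nat <= Lam / mu + 1 ->
  exists S V I1 I2, is_solution F1 F2 Lam mu r k gam1 gam2 v1 v2 S V I1 I2 /\
    S 0 = x0 0%nat /\ V 0 = x0 1%nat /\ I1 0 = x0 2%nat /\ I2 0 = x0 3%nat.
Proof.
  intros Hx0 HN0.
  destruct Gf_bound as [Lg [Bg [HLg [HL HB]]]].
  destruct (picard Gf Lg Bg x0 HL HLg HB) as [Zf [HZ0 [HZc HZd]]].
  assert (HM := Mx_pos). assert (HM0 : 0 <= Mx) by lra.
  assert (Hlm := lm_pos). assert (Ha1 := a1_ge). assert (Ha2 := a2_ge).
  assert (Hnn : forall j, (j < 4)%nat -> forall t, 0 <= t -> 0 <= Zf t j).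
  { intros j Hj. apply (barrier (fun t => Zf t j) (fun t => Gf (Zf t) j) 1);
      [lra | intros t; apply HZc | intros t Ht; apply HZd; exact Ht | rewrite HZ0; apply Hx0; exact Hj | ].
    intros t Ht [_ Hneg]. assert (Hc : cl (Zf t j) = 0) by (apply cl_neg; lra).
      assert (Hr0 : forall i, 0 <= cl (Zf t i)) by (intros; apply cl_range; lra).
      destruct j as [|[|[|[|j]]]]; unfold Gf; try rewrite Hc.
      - rewrite (inc_0i F1 f1 HF1), (inc_0i F2 f2 HF2) by auto. lra.
      - generalize (Hr0 0%nat). nra.
      - rewrite (inc_s0 F1 f1 HF1) by auto. lra.
      - rewrite (inc_s0 F2 f2 HF2) by auto. lra.
      - lia. }
  assert (HNb : forall t, 0 <= t -> sumN Zf t <= Lam / mu + 1).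
  { intros t Ht.
    cut (0 <= (Lam / mu + 1) - sumN Zf t). lra.
    apply (barrier (fun t => (Lam / mu + 1) - sumN Zf t)
       (fun t => - (Gf (Zf t) 0%nat + Gf (Zf t) 1%nat + Gf (Zf t) 2%nat + Gf (Zf t) 3%nat)) 1 ltac:(lra)); [| | | |exact Ht].
    - intros u. unfold sumN. apply cont_minus_R. apply continuous_const.
      repeat apply cont_plus_R; apply HZc.
    - intros u Hu. unfold sumN. eapply d_eqv.
      apply (d_minus (fun _ => Lam / mu + 1) (fun t => Zf t 0%nat + Zf t 1%nat + Zf t 2%nat + Zf t 3%nat)).
      apply d_const.
      apply (d_plus (fun t => Zf t 0%nat + Zf t 1%nat + Zf t 2%nat) (fun t => Zf t 3%nat)); [|apply HZd; auto].
      apply (d_plus (fun t => Zf t 0%nat + Zf t 1%nat) (fun t => Zf t 2%nat)); [|apply HZd; auto].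
      apply (d_plus (fun t => Zf t 0%nat) (fun t => Zf t 1%nat)); apply HZd; auto.
      req.
    - unfold sumN. rewrite !HZ0. lra.
    - intros u Hu [Hl Hr']. unfold sumN in *.
      assert (H0 := Hnn 0%nat ltac:(lia) u ltac:(lra)). assert (H1 := Hnn 1%nat ltac:(lia) u ltac:(lra)).
      assert (H2 := Hnn 2%nat ltac:(lia) u ltac:(lra)). assert (H3 := Hnn 3%nat ltac:(lia) u ltac:(lra)).
      unfold Gf. unfold cl. unfold Mx in *.
      rewrite !(cl_id (Lam / mu + 2)) by lra.
      unfold lm, lam, a1, a2, alpha in *.
      assert (Lam / mu * mu = Lam) by (field; lra).
      nra. }
  assert (Hid : forall t, 0 <= t -> forall j, (j < 4)%nat -> cl (Zf t j) = Zf t j).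
  { intros t Ht j Hj. unfold cl. apply cl_id.
    assert (H0 := Hnn 0%nat ltac:(lia) t Ht). assert (H1 := Hnn 1%nat ltac:(lia) t Ht).
    assert (H2 := Hnn 2%nat ltac:(lia) t Ht). assert (H3 := Hnn 3%nat ltac:(lia) t Ht).
    generalize (HNb t Ht). unfold sumN, Mx.
    destruct j as [|[|[|[|j]]]]; intros; try lra. lia. }
  exists (fun t => Zf t 0%nat), (fun t => Zf t 1%nat), (fun t => Zf t 2%nat), (fun t => Zf t 3%nat).
  split; [|rewrite !HZ0; auto].
  split; [|split; [|split; [|split; [|split]]]].
  - intros t Ht. repeat split; apply Hnn; auto; lia.
  - apply (rc_of_cont (fun t => Zf t 0%nat)). apply HZc.
  - apply (rc_of_cont (fun t => Zf t 1%nat)). apply HZc.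
  - apply (rc_of_cont (fun t => Zf t 2%nat)). apply HZc.
  - apply (rc_of_cont (fun t => Zf t 3%nat)). apply HZc.
  - intros t Ht. assert (Ht' : 0 <= t) by lra.
    assert (E0 := Hid t Ht' 0%nat ltac:(lia)). assert (E1 := Hid t Ht' 1%nat ltac:(lia)).
    assert (E2 := Hid t Ht' 2%nat ltac:(lia)). assert (E3 := Hid t Ht' 3%nat ltac:(lia)).
    split; [|split; [|split]].
    + eapply d_eqv. apply (HZd t 0%nat Ht). unfold Gf. rewrite E0, E2, E3. reflexivity.
    + eapply d_eqv. apply (HZd t 1%nat Ht). unfold Gf. rewrite E0, E1, E3. reflexivity.
    + eapply d_eqv. apply (HZd t 2%nat Ht). unfold Gf. rewrite E0, E2. reflexivity.
    + eapply d_eqv. apply (HZd t 3%nat Ht). unfold Gf. rewrite E0, E1, E3. reflexivity.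
Qed.


Lemma rc_opp (x : R -> R) : filterlim x (at_right 0) (locally (x 0)) ->
  filterlim (fun t => - x t) (at_right 0) (locally (- x 0)).
Proof.
  intros H. apply eps_rc. intros e He. destruct (rc_eps x (x 0) H e He) as [d [Hd Hs]].
  exists d. split; auto. intros s Hs'. replace (- x s - - x 0) with (- (x s - x 0)) by ring.
  rewrite Rabs_Ropp. auto.
Qed.

Lemma cmp_le (x xd : R -> R) (a K c m : R) :
  filterlim x (at_right 0) (locally (x 0)) ->
  (forall t, 0 < t -> is_derive x t (xd t)) ->
  (forall t, 0 < t -> xd t - c * K * exp (- c * t) + a * (x t + K * exp (- c * t) + m) <= 0) ->
  forall t, 0 <= t -> x t + K * exp (- c * t) + m <= (x 0 + K + m) * exp (- a * t).
Proof.
  intros Hrc Hd Hg t Ht.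
  assert (H := cmp (fun t => - x t) (fun t => - xd t) a (- K) c (- m) (rc_opp x Hrc)).
  assert (H' : forall t, 0 <= t -> - x t + - K * exp (- c * t) + - m >= (- x 0 + - K + - m) * exp (- a * t)).
  { apply H. intros u Hu. apply (is_derive_opp x). auto.
    intros u Hu. specialize (Hg u Hu). lra. }
  specialize (H' t Ht). lra.
Qed.

Lemma dist4_ge a1 a2 a3 a4 b1 b2 b3 b4 :
  Rabs (a1 - b1) <= dist4 a1 a2 a3 a4 b1 b2 b3 b4 /\ Rabs (a2 - b2) <= dist4 a1 a2 a3 a4 b1 b2 b3 b4 /\
  Rabs (a3 - b3) <= dist4 a1 a2 a3 a4 b1 b2 b3 b4 /\ Rabs (a4 - b4) <= dist4 a1 a2 a3 a4 b1 b2 b3 b4.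
Proof.
  unfold dist4.
  assert (Hs : forall u, (u ^ 2) = Rsqr (Rabs u)) by (intros u; rewrite <- Rsqr_abs; unfold Rsqr; ring).
  assert (G : forall u w, 0 <= w -> Rabs u = sqrt (u ^ 2) -> u ^ 2 <= w -> Rabs u <= sqrt w).
  { intros u w Hw E Hle. rewrite E. apply sqrt_le_1; auto. apply pow2_ge_0. }
  assert (E : forall u, Rabs u = sqrt (u ^ 2)) by (intros u; rewrite Hs, sqrt_Rsqr; auto; apply Rabs_pos).
  generalize (pow2_ge_0 (a1 - b1)) (pow2_ge_0 (a2 - b2)) (pow2_ge_0 (a3 - b3)) (pow2_ge_0 (a4 - b4)). intros.
  repeat split; apply G; auto; lra.
Qed.

Lemma dist4_le a1 a2 a3 a4 b1 b2 b3 b4 :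
  dist4 a1 a2 a3 a4 b1 b2 b3 b4 <= Rabs (a1 - b1) + Rabs (a2 - b2) + Rabs (a3 - b3) + Rabs (a4 - b4).
Proof.
  unfold dist4. set (s := Rabs (a1 - b1) + Rabs (a2 - b2) + Rabs (a3 - b3) + Rabs (a4 - b4)).
  assert (0 <= s) by (unfold s; generalize (Rabs_pos (a1 - b1)) (Rabs_pos (a2 - b2)) (Rabs_pos (a3 - b3)) (Rabs_pos (a4 - b4)); lra).
  rewrite <- (sqrt_pow2 s H). apply sqrt_le_1.
  generalize (pow2_ge_0 (a1 - b1)) (pow2_ge_0 (a2 - b2)) (pow2_ge_0 (a3 - b3)) (pow2_ge_0 (a4 - b4)). lra.
  apply pow2_ge_0.
  unfold s. 
  assert (Hs : forall u, (u ^ 2) = Rabs u * Rabs u) by (intros u; rewrite <- Rabs_mult; replace (u*u) with (u^2) by ring; symmetry; apply Rabs_pos_eq; apply pow2_ge_0).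
  rewrite (Hs (a1 - b1)), (Hs (a2 - b2)), (Hs (a3 - b3)), (Hs (a4 - b4)).
  generalize (Rabs_pos (a1 - b1)) (Rabs_pos (a2 - b2)) (Rabs_pos (a3 - b3)) (Rabs_pos (a4 - b4)).
  generalize (Rabs (a1 - b1)) (Rabs (a2 - b2)) (Rabs (a3 - b3)) (Rabs (a4 - b4)). intros. nra.
Qed.

Lemma exp_le1 a t : 0 <= a -> 0 <= t -> exp (- a * t) <= 1.
Proof. intros. rewrite <- exp_0. destruct (Req_dec (a*t) 0). replace (-a*t) with 0 by lra. lra.
  left. apply exp_increasing. nra. Qed.

Lemma exp_mono a b t : a <= b -> 0 <= t -> exp (- b * t) <= exp (- a * t).
Proof. intros. destruct (Req_dec (- b * t) (- a * t)) as [E|E]. rewrite E; lra.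
  left. apply exp_increasing. nra. Qed.

Definition s0 := Lam / lm.
Definition vs := r * Lam / (mu * lm).

Lemma s0_facts : 0 < s0 /\ 0 < vs /\ Lam = lm * s0 /\ mu * vs = r * s0 /\ s0 + vs = Lam / mu.
Proof.
  assert (Hlm := lm_pos). unfold s0, vs.
  split. apply Rdiv_lt_0_compat; lra.
  split. apply Rdiv_lt_0_compat; nra.
  split. field; lra. split. field; lra.
  unfold lm, lam in *. field. lra.
Qed.

Lemma E0_eqs : E0_S Lam r mu = s0 /\ E0_V Lam r mu = vs.
Proof. split; reflexivity. Qed.

Lemma dist_init (a b : R) (Ha : 0 <= a) (Hb : 0 <= b) (Hab : a = 0 \/ b = 0) :
  dist4 s0 vs a b s0 vs 0 0 = a + b.
Proof.
  unfold dist4. replace ((s0 - s0) ^ 2 + (vs - vs) ^ 2 + (a - 0) ^ 2 + (b - 0) ^ 2) with ((a + b) ^ 2).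
  apply sqrt_pow2. lra. destruct Hab as [-> | ->]; ring.
Qed.

Lemma sol_parts S V I1 I2 : is_solution F1 F2 Lam mu r k gam1 gam2 v1 v2 S V I1 I2 ->
  (forall t, 0 <= t -> 0 <= S t /\ 0 <= V t /\ 0 <= I1 t /\ 0 <= I2 t) /\
  filterlim S (at_right 0) (locally (S 0)) /\
  filterlim V (at_right 0) (locally (V 0)) /\
  filterlim I1 (at_right 0) (locally (I1 0)) /\
  filterlim I2 (at_right 0) (locally (I2 0)) /\
  (forall t, 0 < t -> is_derive S t (Lam - F1 (S t) (I1 t) - F2 (S t) (I2 t) - lm * S t)) /\
  (forall t, 0 < t -> is_derive V t (r * S t - (mu + k * I2 t) * V t)) /\
  (forall t, 0 < t -> is_derive I1 t (F1 (S t) (I1 t) - a1 * I1 t)) /\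
  (forall t, 0 < t -> is_derive I2 t (F2 (S t) (I2 t) + k * I2 t * V t - a2 * I2 t)).
Proof.
  intros [Hnn [H1 [H2 [H3 [H4 Hd]]]]]. repeat (split; [assumption|]).
  split; [intros t Ht; apply (Hd t Ht)|].
  split; [intros t Ht; apply (Hd t Ht)|].
  split; [intros t Ht; apply (Hd t Ht)|].
  intros t Ht; apply (Hd t Ht).
Qed.

Lemma growth_contra (I : R -> R) (rho c eps : R) : 0 < rho -> 0 < c -> 0 < eps ->
  (forall t, 0 <= t -> I t >= rho * exp (c * t)) -> (forall t, 0 <= t -> I t < eps) -> False.
Proof.
  intros Hro Hc He Hg Hb. set (t := eps / (rho * c) + 1).
  assert (Ht : 0 < t) by (unfold t; assert (0 < eps / (rho * c)) by (apply Rdiv_lt_0_compat; nra); lra).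
  specialize (Hg t ltac:(lra)). specialize (Hb t ltac:(lra)).
  generalize (exp_ineq1_le (c * t)). intros He1.
  assert (rho * c * t > eps).
  { unfold t. rewrite Rmult_plus_distr_l. replace (rho * c * (eps / (rho * c))) with eps by (field; nra). nra. }
  nra.
Qed.

Lemma unstable1 : a1 < f1 s0 0 -> ~ E0_stable F1 F2 Lam mu r k gam1 gam2 v1 v2.
Proof.
  intros Hf Hst. destruct s0_facts as [Hs0 [Hvs [EL [Emv Esum]]]].
  set (c := (f1 s0 0 - a1) / 2). assert (Hc : 0 < c) by (unfold c; lra).
  destruct (cont2_eps f1 s0 0 (inc_fcont F1 f1 HF1 s0 0) c Hc) as [d [Hd Hdd]].
  destruct (Hst (d/2) ltac:(lra)) as [delta [Hdel Hdl]].
  set (rho := Rmin (delta / 2) (1 / 2)).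
  assert (Hrho : 0 < rho) by (unfold rho; apply Rmin_glb_lt; lra).
  assert (Hrho1 : rho <= 1/2) by (unfold rho; apply Rmin_r).
  assert (Hrho2 : rho < delta) by (unfold rho; generalize (Rmin_l (delta/2) (1/2)); lra).
  set (x0 := fun j : nat => match j with O => s0 | S O => vs | S (S O) => rho | _ => 0 end).
  destruct (exist_sol x0) as [S [V [I1 [I2 [Hsol [ES [EV [EI1 EI2]]]]]]]].
  { intros [|[|[|[|i]]]] Hi; simpl; lra. }
  { simpl. lra. }
  simpl in ES, EV, EI1, EI2.
  assert (Hd0 : dist4 (S 0) (V 0) (I1 0) (I2 0) (E0_S Lam r mu) (E0_V Lam r mu) 0 0 < delta).
  { rewrite ES, EV, EI1, EI2. change (E0_S Lam r mu) with s0. change (E0_V Lam r mu) with vs.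
    rewrite dist_init; lra. }
  specialize (Hdl S V I1 I2 Hsol Hd0).
  destruct (sol_parts S V I1 I2 Hsol) as [Hnn [HrS [HrV [HrI1 [HrI2 [DS [DV [DI1 DI2]]]]]]]].
  assert (Hclose : forall t, 0 <= t -> Rabs (S t - s0) < d /\ Rabs (I1 t - 0) < d /\ I1 t < d / 2).
  { intros t Ht. specialize (Hdl t Ht). destruct (dist4_ge (S t) (V t) (I1 t) (I2 t) s0 vs 0 0) as [A1 [_ [A3 _]]].
    change (E0_S Lam r mu) with s0 in Hdl. change (E0_V Lam r mu) with vs in Hdl.
    rewrite Rminus_0_r in A3. rewrite Rminus_0_r. generalize (Rle_abs (I1 t)). lra. }
  apply (growth_contra I1 rho c (d/2)); auto; [lra| |apply Hclose].
  intros t Ht.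
  assert (H := cmp I1 (fun t => F1 (S t) (I1 t) - a1 * I1 t) (- c) 0 0 0 HrI1 DI1).
  assert (H' : I1 t + 0 * exp (- 0 * t) + 0 >= (I1 0 + 0 + 0) * exp (- - c * t)).
  { apply H; auto. intros u Hu. destruct (Hnn u ltac:(lra)) as [HS [_ [HI _]]].
    rewrite (inc_eq F1 f1 HF1) by auto.
    destruct (Hclose u ltac:(lra)) as [C1 [C2 _]].
    specialize (Hdd (S u) (I1 u) C1 C2). apply Rabs_lt_between in Hdd.
    assert (0 <= I1 u * (f1 (S u) (I1 u) - a1 - c)) by (apply Rmult_le_pos; unfold c in *; lra).
    lra. }
  rewrite EI1 in H'. replace (- - c * t) with (c * t) in H' by ring. lra.
Qed.

Lemma unstable2 : a2 < f2 s0 0 + k * vs -> ~ E0_stable F1 F2 Lam mu r k gam1 gam2 v1 v2.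
Proof.
  intros Hf Hst. destruct s0_facts as [Hs0 [Hvs [EL [Emv Esum]]]].
  set (c := (f2 s0 0 + k * vs - a2) / 4). assert (Hc : 0 < c) by (unfold c; lra).
  destruct (cont2_eps f2 s0 0 (inc_fcont F2 f2 HF2 s0 0) c Hc) as [d' [Hd' Hdd]].
  set (d := Rmin d' (c / k)).
  assert (Hd : 0 < d) by (unfold d; apply Rmin_glb_lt; auto; apply Rdiv_lt_0_compat; lra).
  assert (Hdd' : d <= d') by apply Rmin_l.
  assert (Hdk : d * k <= c).
  { unfold d. generalize (Rmin_r d' (c / k)). intros. apply (Rmult_le_compat_r k) in H; [|lra].
    unfold Rdiv in H. rewrite Rmult_assoc, Rinv_l in H; lra. }
  destruct (Hst (d/2) ltac:(lra)) as [delta [Hdel Hdl]].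
  set (rho := Rmin (delta / 2) (1 / 2)).
  assert (Hrho : 0 < rho) by (unfold rho; apply Rmin_glb_lt; lra).
  assert (Hrho1 : rho <= 1/2) by (unfold rho; apply Rmin_r).
  assert (Hrho2 : rho < delta) by (unfold rho; generalize (Rmin_l (delta/2) (1/2)); lra).
  set (x0 := fun j : nat => match j with O => s0 | S O => vs | S (S O) => 0 | S (S (S O)) => rho | _ => 0 end).
  destruct (exist_sol x0) as [S [V [I1 [I2 [Hsol [ES [EV [EI1 EI2]]]]]]]].
  { intros [|[|[|[|i]]]] Hi; simpl; lra. }
  { simpl. lra. }
  simpl in ES, EV, EI1, EI2.
  assert (Hd0 : dist4 (S 0) (V 0) (I1 0) (I2 0) (E0_S Lam r mu) (E0_V Lam r mu) 0 0 < delta).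
  { rewrite ES, EV, EI1, EI2. change (E0_S Lam r mu) with s0. change (E0_V Lam r mu) with vs.
    rewrite dist_init; lra. }
  specialize (Hdl S V I1 I2 Hsol Hd0).
  destruct (sol_parts S V I1 I2 Hsol) as [Hnn [HrS [HrV [HrI1 [HrI2 [DS [DV [DI1 DI2]]]]]]]].
  assert (Hclose : forall t, 0 <= t -> Rabs (S t - s0) < d /\ Rabs (I2 t - 0) < d /\ I2 t < d / 2 /\ Rabs (V t - vs) < d).
  { intros t Ht. specialize (Hdl t Ht). destruct (dist4_ge (S t) (V t) (I1 t) (I2 t) s0 vs 0 0) as [A1 [A2 [_ A4]]].
    change (E0_S Lam r mu) with s0 in Hdl. change (E0_V Lam r mu) with vs in Hdl.
    rewrite Rminus_0_r in A4. rewrite Rminus_0_r. generalize (Rle_abs (I2 t)). lra. }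
  apply (growth_contra I2 rho c (d/2)); auto; [lra| |apply Hclose].
  intros t Ht.
  assert (H := cmp I2 (fun t => F2 (S t) (I2 t) + k * I2 t * V t - a2 * I2 t) (- c) 0 0 0 HrI2 DI2).
  assert (H' : I2 t + 0 * exp (- 0 * t) + 0 >= (I2 0 + 0 + 0) * exp (- - c * t)).
  { apply H; auto. intros u Hu. destruct (Hnn u ltac:(lra)) as [HS [HV [_ HI]]].
    rewrite (inc_eq F2 f2 HF2) by auto.
    destruct (Hclose u ltac:(lra)) as [C1 [C2 [_ C4]]].
    specialize (Hdd (S u) (I2 u) ltac:(lra) ltac:(lra)). apply Rabs_lt_between in Hdd.
    apply Rabs_lt_between in C4.
    assert (k * V u >= k * vs - c) by nra.
    assert (0 <= I2 u * (f2 (S u) (I2 u) + k * V u - a2 - c)) by (apply Rmult_le_pos; unfold c in *; lra).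
    lra. }
  rewrite EI2 in H'. replace (- - c * t) with (c * t) in H' by ring. lra.
Qed.


Lemma prod_bd a D x y : Rabs a <= D -> 0 <= x -> x <= y -> - (D * y) <= a * x <= D * y.
Proof.
  intros Ha Hx Hxy. apply Rabs_le_between. rewrite Rabs_mult, (Rabs_pos_eq x) by auto.
  assert (0 <= D) by (generalize (Rabs_pos a); lra).
  apply Rle_trans with (D * x). apply Rmult_le_compat_r; auto. apply Rmult_le_compat_l; auto.
Qed.

Lemma div_le a b q : 0 < q -> a * q <= b * q -> a <= b.
Proof. intros Hq H. apply Rmult_le_reg_r with q; auto. Qed.

Lemma core_est : f1 s0 0 < a1 -> f2 s0 0 + k * vs < a2 ->
  exists d0 M c, 0 < d0 /\ 0 < M /\ 0 < c /\ forall S V I1 I2,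
    is_solution F1 F2 Lam mu r k gam1 gam2 v1 v2 S V I1 I2 ->
    dist4 (S 0) (V 0) (I1 0) (I2 0) s0 vs 0 0 < d0 ->
    forall t, 0 <= t -> dist4 (S t) (V t) (I1 t) (I2 t) s0 vs 0 0 <=
       M * dist4 (S 0) (V 0) (I1 0) (I2 0) s0 vs 0 0 * exp (- c * t).
Proof.
  intros Hf1 Hf2. destruct s0_facts as [Hs0 [Hvs [EL [Emv Esum]]]].
  assert (Hlm := lm_pos). assert (Ha1 := a1_ge). assert (Ha2 := a2_ge).
  assert (Elm : lm = r + mu) by reflexivity.
  set (c := Rmin (Rmin ((a1 - f1 s0 0) / 2) ((a2 - f2 s0 0 - k * vs) / 2)) (mu / 2)).
  assert (Hc1 : c <= (a1 - f1 s0 0) / 2) by (unfold c; generalize (Rmin_l (Rmin ((a1 - f1 s0 0) / 2) ((a2 - f2 s0 0 - k * vs) / 2)) (mu / 2)) (Rmin_l ((a1 - f1 s0 0) / 2) ((a2 - f2 s0 0 - k * vs) / 2)); lra).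
  assert (Hc2 : c <= (a2 - f2 s0 0 - k * vs) / 2) by (unfold c; generalize (Rmin_l (Rmin ((a1 - f1 s0 0) / 2) ((a2 - f2 s0 0 - k * vs) / 2)) (mu / 2)) (Rmin_r ((a1 - f1 s0 0) / 2) ((a2 - f2 s0 0 - k * vs) / 2)); lra).
  assert (Hc3 : c <= mu / 2) by (unfold c; apply Rmin_r).
  assert (Hc : 0 < c) by (unfold c; repeat apply Rmin_glb_lt; lra).
  destruct (cont2_eps f1 s0 0 (inc_fcont F1 f1 HF1 s0 0) c Hc) as [dd1 [Hdd1 Hc1d]].
  destruct (cont2_eps f2 s0 0 (inc_fcont F2 f2 HF2 s0 0) (c/2) ltac:(lra)) as [dd2 [Hdd2 Hc2d]].
  set (d0 := Rmin (Rmin (dd1 / 2) (dd2 / 2)) (Rmin (c / (6 * k)) 1)).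
  assert (Hck : 0 < c / (6 * k)) by (apply Rdiv_lt_0_compat; lra).
  assert (Hd0p : 0 < d0) by (unfold d0; repeat apply Rmin_glb_lt; lra).
  assert (Hd01 : d0 <= dd1 / 2) by (unfold d0; generalize (Rmin_l (Rmin (dd1 / 2) (dd2 / 2)) (Rmin (c / (6 * k)) 1)) (Rmin_l (dd1/2) (dd2/2)); lra).
  assert (Hd02 : d0 <= dd2 / 2) by (unfold d0; generalize (Rmin_l (Rmin (dd1 / 2) (dd2 / 2)) (Rmin (c / (6 * k)) 1)) (Rmin_r (dd1/2) (dd2/2)); lra).
  assert (Hd03 : d0 * (6 * k) <= c).
  { assert (d0 <= c / (6 * k)) by (unfold d0; generalize (Rmin_r (Rmin (dd1 / 2) (dd2 / 2)) (Rmin (c / (6 * k)) 1)) (Rmin_l (c / (6 * k)) 1); lra).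
    apply (Rmult_le_compat_r (6 * k)) in H; [|lra]. unfold Rdiv in H. rewrite Rmult_assoc, Rinv_l in H; lra. }
  set (s0' := s0 + d0).
  assert (Hf1' : f1 s0' 0 <= a1 - c).
  { assert (Rabs (f1 s0' 0 - f1 s0 0) < c) by (apply Hc1d; unfold s0'; [rewrite Rabs_pos_eq|rewrite Rminus_diag, Rabs_R0]; lra).
    apply Rabs_lt_between in H. lra. }
  assert (Hf2' : f2 s0' 0 <= f2 s0 0 + c / 2).
  { assert (Rabs (f2 s0' 0 - f2 s0 0) < c / 2) by (apply Hc2d; unfold s0'; [rewrite Rabs_pos_eq|rewrite Rminus_diag, Rabs_R0]; lra).
    apply Rabs_lt_between in H. lra. }
  set (Lf := f1 s0' 0 + f2 s0' 0).
  assert (HLf : 0 <= Lf).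
  { unfold Lf. generalize (proj2 (inc_nn F1 f1 HF1 s0' 0 ltac:(unfold s0'; lra) ltac:(lra))) (proj2 (inc_nn F2 f2 HF2 s0' 0 ltac:(unfold s0'; lra) ltac:(lra))). lra. }
  set (Vmax := vs + 3 * d0).
  set (P5 := 2 * Lf / (lm - c)).
  assert (HP5 : 0 <= P5) by (unfold P5; apply Rdiv_le_0_compat; lra).
  set (P6 := (r * (1 + P5) + k * Vmax) / (mu - c)).
  assert (HP6 : 0 <= P6) by (unfold P6, Vmax; apply Rdiv_le_0_compat; nra).
  exists d0, (6 + P5 + P6), c. split; [auto|split; [lra|split; [auto|]]].
  intros S V I1 I2 Hsol HD0.
  set (D0 := dist4 (S 0) (V 0) (I1 0) (I2 0) s0 vs 0 0) in *.
  destruct (sol_parts S V I1 I2 Hsol) as [Hnn [HrS [HrV [HrI1 [HrI2 [DS [DV [DI1 DI2]]]]]]]].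
  destruct (dist4_ge (S 0) (V 0) (I1 0) (I2 0) s0 vs 0 0) as [B1 [B2 [B3 B4]]]. fold D0 in B1, B2, B3, B4.
  rewrite Rminus_0_r in B3, B4.
  destruct (Hnn 0 ltac:(lra)) as [N1 [N2 [N3 N4]]].
  rewrite Rabs_pos_eq in B3, B4 by auto.
  set (d := S 0 - s0) in *. set (y0 := V 0 - vs) in *. set (i1 := I1 0) in *. set (i2 := I2 0) in *.
  assert (HD0p : 0 <= D0) by (generalize (Rabs_pos d); lra).
  assert (St1 : forall t, 0 <= t -> S t - s0 <= d * exp (- lm * t)).
  { intros t Ht.
    assert (H := cmp_le S (fun t => Lam - F1 (S t) (I1 t) - F2 (S t) (I2 t) - lm * S t) lm 0 0 (- s0) HrS DS).
    assert (H' : S t + 0 * exp (- 0 * t) + - s0 <= (S 0 + 0 + - s0) * exp (- lm * t)).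
    { apply H; auto. intros u Hu. destruct (Hnn u ltac:(lra)) as [M1 [M2 [M3 M4]]].
      generalize (proj1 (inc_nn F1 f1 HF1 _ _ M1 M3)) (proj1 (inc_nn F2 f2 HF2 _ _ M1 M4)). lra. }
    unfold d. lra. }
  assert (Sup : forall t, 0 <= t -> S t <= s0').
  { intros t Ht. specialize (St1 t Ht). generalize (exp_le1 lm t ltac:(lra) Ht) (exp_pos (- lm * t)). intros.
    unfold s0'. apply Rabs_le_between in B1. assert (d * exp (- lm * t) <= D0). 
    { destruct (Rle_dec 0 d). nra. nra. } lra. }
  assert (St2 : forall t, 0 <= t -> V t + d * exp (- lm * t) - vs <= (y0 + d) * exp (- mu * t)).
  { intros t Ht.
    assert (H := cmp_le V (fun t => r * S t - (mu + k * I2 t) * V t) mu d lm (- vs) HrV DV).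
    assert (H' : V t + d * exp (- lm * t) + - vs <= (V 0 + d + - vs) * exp (- mu * t)).
    { apply H; auto. intros u Hu. destruct (Hnn u ltac:(lra)) as [M1 [M2 [M3 M4]]].
      specialize (St1 u ltac:(lra)). assert (0 <= k * I2 u * V u) by (apply Rmult_le_pos; nra).
      rewrite Elm in *. nra. }
    unfold y0. lra. }
  assert (Vup : forall t, 0 <= t -> V t <= Vmax).
  { intros t Ht. specialize (St2 t Ht).
    generalize (exp_le1 lm t ltac:(lra) Ht) (exp_pos (- lm * t)) (exp_le1 mu t ltac:(lra) Ht) (exp_pos (- mu * t)). intros.
    apply Rabs_le_between in B1. apply Rabs_le_between in B2.
    assert (Hx1 : - d * exp (- lm * t) <= D0) by (destruct (Rle_dec 0 d); nra).
    assert (Hx2 : (y0 + d) * exp (- mu * t) <= 2 * D0) by (destruct (Rle_dec 0 (y0 + d)); nra).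
    unfold Vmax. lra. }
  assert (St3 : forall t, 0 <= t -> I1 t <= i1 * exp (- c * t)).
  { intros t Ht.
    assert (H := cmp_le I1 (fun t => F1 (S t) (I1 t) - a1 * I1 t) c 0 0 0 HrI1 DI1).
    assert (H' : I1 t + 0 * exp (- 0 * t) + 0 <= (I1 0 + 0 + 0) * exp (- c * t)).
    { apply H; auto. intros u Hu. destruct (Hnn u ltac:(lra)) as [M1 [M2 [M3 M4]]].
      rewrite (inc_eq F1 f1 HF1) by auto.
      assert (f1 (S u) (I1 u) <= f1 (S u) 0) by (apply (inc_mono_i F1 f1 HF1); auto; lra).
      assert (f1 (S u) 0 <= f1 s0' 0) by (apply (inc_mono_s F1 f1 HF1); [split; [auto| apply Sup; lra] | lra]).
      assert (I1 u * (f1 (S u) (I1 u) - a1 + c) <= 0) by nra.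
      lra. }
    unfold i1. lra. }
  assert (St4 : forall t, 0 <= t -> I2 t <= i2 * exp (- c * t)).
  { intros t Ht.
    assert (H := cmp_le I2 (fun t => F2 (S t) (I2 t) + k * I2 t * V t - a2 * I2 t) c 0 0 0 HrI2 DI2).
    assert (H' : I2 t + 0 * exp (- 0 * t) + 0 <= (I2 0 + 0 + 0) * exp (- c * t)).
    { apply H; auto. intros u Hu. destruct (Hnn u ltac:(lra)) as [M1 [M2 [M3 M4]]].
      rewrite (inc_eq F2 f2 HF2) by auto.
      assert (f2 (S u) (I2 u) <= f2 (S u) 0) by (apply (inc_mono_i F2 f2 HF2); auto; lra).
      assert (f2 (S u) 0 <= f2 s0' 0) by (apply (inc_mono_s F2 f2 HF2); [split; [auto| apply Sup; lra] | lra]).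
      assert (V u <= Vmax) by (apply Vup; lra).
      assert (k * Vmax <= k * vs + c / 2) by (unfold Vmax; nra).
      assert (f2 (S u) (I2 u) + k * V u - a2 + c <= 0) by nra.
      nra. }
    unfold i2. lra. }
  assert (HcL : c < lm) by (rewrite Elm; lra).
  assert (HcM : c < mu) by lra.
  set (K5 := Lf * (i1 + i2) / (lm - c)).
  assert (HK5 : 0 <= K5) by (unfold K5; apply Rdiv_le_0_compat; nra).
  assert (EK5 : K5 * (lm - c) = Lf * (i1 + i2)) by (unfold K5; field; lra).
  assert (HK5b : K5 <= P5 * D0).
  { apply (div_le _ _ (lm - c)). lra. rewrite EK5.
    replace (P5 * D0 * (lm - c)) with (2 * Lf * D0) by (unfold P5; field; lra). nra. }
  assert (St5 : forall t, 0 <= t -> S t - s0 >= (d + K5) * exp (- lm * t) - K5 * exp (- c * t)).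
  { intros t Ht.
    assert (H := cmp S (fun t => Lam - F1 (S t) (I1 t) - F2 (S t) (I2 t) - lm * S t) lm K5 c (- s0) HrS DS).
    assert (H' : S t + K5 * exp (- c * t) + - s0 >= (S 0 + K5 + - s0) * exp (- lm * t)).
    { apply H; auto. intros u Hu. destruct (Hnn u ltac:(lra)) as [M1 [M2 [M3 M4]]].
      rewrite (inc_eq F1 f1 HF1), (inc_eq F2 f2 HF2) by auto.
      assert (G1 : f1 (S u) (I1 u) <= f1 s0' 0).
      { apply Rle_trans with (f1 (S u) 0). apply (inc_mono_i F1 f1 HF1); auto; lra.
        apply (inc_mono_s F1 f1 HF1); [split; [auto| apply Sup; lra] | lra]. }
      assert (G2 : f2 (S u) (I2 u) <= f2 s0' 0).
      { apply Rle_trans with (f2 (S u) 0). apply (inc_mono_i F2 f2 HF2); auto; lra.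
        apply (inc_mono_s F2 f2 HF2); [split; [auto| apply Sup; lra] | lra]. }
      assert (G3 : 0 <= f1 s0' 0) by (apply (inc_nn F1 f1 HF1); unfold s0'; lra).
      assert (G4 : 0 <= f2 s0' 0) by (apply (inc_nn F2 f2 HF2); unfold s0'; lra).
      assert (G5 := St3 u ltac:(lra)). assert (G6 := St4 u ltac:(lra)).
      set (E := exp (- c * u)) in *. assert (HE : 0 < E) by apply exp_pos.
      assert (I1 u * f1 (S u) (I1 u) <= i1 * E * f1 s0' 0).
      { apply Rle_trans with (I1 u * f1 s0' 0). apply Rmult_le_compat_l; auto. apply Rmult_le_compat_r; auto. }
      assert (I2 u * f2 (S u) (I2 u) <= i2 * E * f2 s0' 0).
      { apply Rle_trans with (I2 u * f2 s0' 0). apply Rmult_le_compat_l; auto. apply Rmult_le_compat_r; auto. }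
      assert (i1 * E * f1 s0' 0 + i2 * E * f2 s0' 0 <= Lf * (i1 + i2) * E).
      { unfold Lf. assert (0 <= i1 * E * f2 s0' 0) by (apply Rmult_le_pos; nra).
        assert (0 <= i2 * E * f1 s0' 0) by (apply Rmult_le_pos; nra). nra. }
      assert (K5 * (lm - c) * E = Lf * (i1 + i2) * E) by (rewrite EK5; ring).
      rewrite EL. nra. }
    unfold d. lra. }
  assert (HVm : 0 <= Vmax) by (unfold Vmax; lra).
  set (C6 := r * (D0 + K5) + k * i2 * Vmax).
  set (K6 := C6 / (mu - c)).
  assert (HC6 : 0 <= C6) by (unfold C6; apply Rplus_le_le_0_compat; [nra| apply Rmult_le_pos; nra]).
  assert (HK6 : 0 <= K6) by (unfold K6; apply Rdiv_le_0_compat; lra).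
  assert (EK6 : K6 * (mu - c) = C6) by (unfold K6; field; lra).
  assert (HK6b : K6 <= P6 * D0).
  { apply (div_le _ _ (mu - c)). lra. rewrite EK6.
    replace (P6 * D0 * (mu - c)) with (r * (1 + P5) * D0 + k * Vmax * D0) by (unfold P6; field; lra).
    unfold C6. assert (k * i2 * Vmax <= k * Vmax * D0) by (assert (0 <= k * Vmax) by nra; nra). nra. }
  assert (St6 : forall t, 0 <= t -> V t - vs >= (y0 + K6) * exp (- mu * t) - K6 * exp (- c * t)).
  { intros t Ht.
    assert (H := cmp V (fun t => r * S t - (mu + k * I2 t) * V t) mu K6 c (- vs) HrV DV).
    assert (H' : V t + K6 * exp (- c * t) + - vs >= (V 0 + K6 + - vs) * exp (- mu * t)).
    { apply H; auto. intros u Hu. destruct (Hnn u ltac:(lra)) as [M1 [M2 [M3 M4]]].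
      assert (G5 := St5 u ltac:(lra)). assert (G6 := St4 u ltac:(lra)). assert (G7 := Vup u ltac:(lra)).
      set (E := exp (- c * u)) in *. assert (HE : 0 < E) by apply exp_pos.
      assert (HEl : exp (- lm * u) <= E) by (apply exp_mono; lra).
      assert (HEl0 : 0 < exp (- lm * u)) by apply exp_pos.
      assert (Hdl : - (D0 * E) <= d * exp (- lm * u)) by (apply (prod_bd d D0); lra).
      assert (HK5E : 0 <= K5 * exp (- lm * u)) by nra.
      assert (r * (S u - s0) >= - (r * (D0 + K5) * E)) by nra.
      assert (I2 u * V u <= i2 * E * Vmax).
      { apply Rle_trans with (I2 u * Vmax). apply Rmult_le_compat_l; auto. apply Rmult_le_compat_r; auto. }
      assert (K6 * (mu - c) * E = C6 * E) by (rewrite EK6; ring).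
      unfold C6 in *. nra. }
    unfold y0. lra. }
  intros t Ht.
  eapply Rle_trans. apply dist4_le.
  set (E := exp (- c * t)). assert (HE : 0 < E) by apply exp_pos.
  assert (HEl : exp (- lm * t) <= E) by (apply exp_mono; lra).
  assert (HEm : exp (- mu * t) <= E) by (apply exp_mono; lra).
  assert (HEl0 : 0 < exp (- lm * t)) by apply exp_pos.
  assert (HEm0 : 0 < exp (- mu * t)) by apply exp_pos.
  assert (A1 : Rabs (S t - s0) <= (D0 + K5) * E).
  { apply Rabs_le_between. generalize (St1 t Ht) (St5 t Ht). intros Ha Hb. change (exp (- c * t)) with E in Ha, Hb.
    assert (- (D0 * E) <= d * exp (- lm * t) <= D0 * E) by (apply (prod_bd d D0); lra).
    assert (0 <= K5 * exp (- lm * t)) by nra. assert (0 <= K5 * E) by nra. split; lra. }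
  assert (A2 : Rabs (V t - vs) <= (3 * D0 + K6) * E).
  { apply Rabs_le_between. generalize (St2 t Ht) (St6 t Ht). intros Ha Hb. change (exp (- c * t)) with E in Ha, Hb.
    assert (- (D0 * E) <= d * exp (- lm * t) <= D0 * E) by (apply (prod_bd d D0); lra).
    assert (Rabs (y0 + d) <= 2 * D0) by (eapply Rle_trans; [apply Rabs_triang| lra]).
    assert (- (2 * D0 * E) <= (y0 + d) * exp (- mu * t) <= 2 * D0 * E) by (apply (prod_bd (y0 + d) (2 * D0)); lra).
    assert (- (D0 * E) <= y0 * exp (- mu * t) <= D0 * E) by (apply (prod_bd y0 D0); lra).
    assert (0 <= K6 * exp (- mu * t)) by nra. assert (0 <= K6 * E) by nra. split; lra. }
  assert (A3 : Rabs (I1 t - 0) <= D0 * E).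
  { rewrite Rminus_0_r, Rabs_pos_eq by (apply Hnn; auto). generalize (St3 t Ht). fold E. nra. }
  assert (A4 : Rabs (I2 t - 0) <= D0 * E).
  { rewrite Rminus_0_r, Rabs_pos_eq by (apply Hnn; auto). generalize (St4 t Ht). fold E. nra. }
  assert (K5 * E <= P5 * D0 * E) by (apply Rmult_le_compat_r; lra).
  assert (K6 * E <= P6 * D0 * E) by (apply Rmult_le_compat_r; lra).
  nra.
Qed.


Lemma sig1 : sigma F1 Lam r mu = f1 s0 0.
Proof. unfold sigma. apply (inc_sigma F1 f1 HF1). destruct s0_facts; lra. Qed.
Lemma sig2 : sigma F2 Lam r mu = f2 s0 0.
Proof. unfold sigma. apply (inc_sigma F2 f2 HF2). destruct s0_facts; lra. Qed.

Lemma R1_eq : calR1 F1 Lam mu r gam1 v1 = f1 s0 0 / a1.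
Proof. unfold calR1. rewrite sig1. reflexivity. Qed.
Lemma R2_eq : calR2 F2 Lam mu r k gam2 v2 = (f2 s0 0 + k * vs) / a2.
Proof.
  unfold calR2. rewrite sig2. fold a2. unfold vs. fold lm.
  assert (Hlm := lm_pos). assert (Ha2 := a2_ge). field. repeat split; lra.
Qed.

Lemma main_in :
  (calR0 F1 F2 Lam mu r k gam1 gam2 v1 v2 > 1 -> E0_unstable F1 F2 Lam mu r k gam1 gam2 v1 v2) /\
  (calR0 F1 F2 Lam mu r k gam1 gam2 v1 v2 < 1 -> E0_LAS F1 F2 Lam mu r k gam1 gam2 v1 v2).
Proof.
  assert (Ha1 := a1_ge). assert (Ha2 := a2_ge).
  unfold calR0. rewrite R1_eq, R2_eq. split.
  - intros HR. unfold E0_unstable. unfold Rmax in HR. destruct (Rle_dec (f1 s0 0 / a1) ((f2 s0 0 + k * vs) / a2)).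
    + apply unstable2. apply (Rmult_lt_compat_r a2) in HR; [|lra]. unfold Rdiv in HR.
      rewrite Rmult_assoc, Rinv_l in HR; lra.
    + apply unstable1. apply (Rmult_lt_compat_r a1) in HR; [|lra]. unfold Rdiv in HR.
      rewrite Rmult_assoc, Rinv_l in HR; lra.
  - intros HR.
    assert (H1 : f1 s0 0 / a1 < 1) by (eapply Rle_lt_trans; [apply Rmax_l| exact HR]).
    assert (H2 : (f2 s0 0 + k * vs) / a2 < 1) by (eapply Rle_lt_trans; [apply Rmax_r| exact HR]).
    apply (Rmult_lt_compat_r a1) in H1; [|lra]. unfold Rdiv in H1. rewrite Rmult_assoc, Rinv_l in H1 by lra.
    apply (Rmult_lt_compat_r a2) in H2; [|lra]. unfold Rdiv in H2. rewrite Rmult_assoc, Rinv_l in H2 by lra.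
    destruct (core_est ltac:(lra) ltac:(lra)) as [d0 [M [c [Hd0 [HM [Hc Hest]]]]]].
    change (E0_S Lam r mu) with s0. change (E0_V Lam r mu) with vs.
    split.
    + unfold E0_stable. change (E0_S Lam r mu) with s0. change (E0_V Lam r mu) with vs.
      intros eps Heps. exists (Rmin d0 (eps / (M + 1))). split.
      { apply Rmin_glb_lt; auto. apply Rdiv_lt_0_compat; lra. }
      intros S V I1 I2 Hsol HD t Ht.
      assert (HD1 : dist4 (S 0) (V 0) (I1 0) (I2 0) s0 vs 0 0 < d0) by (eapply Rlt_le_trans; [exact HD| apply Rmin_l]).
      assert (HD2 : dist4 (S 0) (V 0) (I1 0) (I2 0) s0 vs 0 0 < eps / (M + 1)) by (eapply Rlt_le_trans; [exact HD| apply Rmin_r]).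
      specialize (Hest S V I1 I2 Hsol HD1 t Ht).
      set (D0 := dist4 (S 0) (V 0) (I1 0) (I2 0) s0 vs 0 0) in *.
      assert (HD0 : 0 <= D0) by (unfold D0, dist4; apply sqrt_pos).
      assert (D0 * (M + 1) < eps).
      { apply (Rmult_lt_compat_r (M + 1)) in HD2; [|lra]. unfold Rdiv in HD2. rewrite Rmult_assoc, Rinv_l in HD2; lra. }
      generalize (exp_le1 c t ltac:(lra) Ht) (exp_pos (- c * t)). intros. nra.
    + exists d0. split; auto. intros S V I1 I2 Hsol HD.
      change (E0_S Lam r mu) with s0. change (E0_V Lam r mu) with vs.
      set (D0 := dist4 (S 0) (V 0) (I1 0) (I2 0) s0 vs 0 0) in *.
      assert (HD0 : 0 <= D0) by (unfold D0, dist4; apply sqrt_pos).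
      apply (filterlim_locally (F := Rbar_locally p_infty)). intros eps.
      assert (Heps := cond_pos eps).
      exists (M * D0 / (c * eps)). intros t Ht.
      assert (HT : 0 <= M * D0 / (c * eps)) by (apply Rdiv_le_0_compat; nra).
      assert (Ht0 : 0 <= t) by lra.
      specialize (Hest S V I1 I2 Hsol HD t Ht0). fold D0 in Hest.
      assert (Hpos : 0 <= dist4 (S t) (V t) (I1 t) (I2 t) s0 vs 0 0) by (unfold dist4; apply sqrt_pos).
      change (Rabs (dist4 (S t) (V t) (I1 t) (I2 t) s0 vs 0 0 - 0) < eps).
      rewrite Rminus_0_r, Rabs_pos_eq by exact Hpos.
      assert (Hct : c * t * eps > M * D0).
      { apply (Rmult_lt_compat_r (c * eps)) in Ht; [|nra]. unfold Rdiv in Ht.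
        rewrite Rmult_assoc, Rinv_l in Ht by nra. lra. }
      assert (He1 : exp (- c * t) * (1 + c * t) <= 1).
      { generalize (exp_ineq1_le (c * t)). intros. 
        assert (exp (- c * t) * exp (c * t) = 1) by (rewrite <- exp_plus; replace (- c * t + c * t) with 0 by ring; apply exp_0).
        assert (0 < exp (- c * t)) by apply exp_pos. nra. }
      assert (HE := exp_pos (- c * t)).
      assert (M * D0 * exp (- c * t) < eps).
      { apply Rnot_le_lt. intros Hn.
        assert (eps * (1 + c * t) <= M * D0 * exp (- c * t) * (1 + c * t)) by (apply Rmult_le_compat_r; nra).
        assert (M * D0 * exp (- c * t) * (1 + c * t) <= M * D0) by (assert (0 <= M * D0) by nra; nra).
        nra. }
      lra.
Qed.

End Model.

Theorem mainTheorem6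
  (Lam mu r k gam1 gam2 v1 v2 : R) (F1 f1 F2 f2 : R -> R -> R)
  (HLam : 0 < Lam) (Hmu : 0 < mu) (Hr : 0 < r) (Hk : 0 < k)
  (Hgam1 : 0 < gam1) (Hgam2 : 0 < gam2) (Hv1 : 0 <= v1) (Hv2 : 0 <= v2)
  (HF1 : incidence_hyp F1 f1) (HF2 : incidence_hyp F2 f2) :
  (calR0 F1 F2 Lam mu r k gam1 gam2 v1 v2 > 1 ->
     E0_unstable F1 F2 Lam mu r k gam1 gam2 v1 v2) /\
  (calR0 F1 F2 Lam mu r k gam1 gam2 v1 v2 < 1 ->
     E0_LAS F1 F2 Lam mu r k gam1 gam2 v1 v2).
Proof. eapply main_in; eauto. Qed.
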